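(* Let $\alpha\in(0,1)$, let $a<T$ and $\lambda$ be positive real numbers, let $u_a\in\mathbb{R}$, and let $f:[a,T]\times\mathbb{R}^{+}\to\mathbb{R}^{+*}$ be continuous. For a function $w$ on $[a,T]$ write $$g(t,w(t)):=\frac{\lambda f(t,w(t))}{\left(\int_a^T f(x,w(x))\,dx\right)^2}.$$ If $(v,M)\in C^{(\alpha)}([a,T],\mathbb{R})\times C^{(\alpha)}([a,T],[0,\infty))$ is a tube solution of the nonlocal conformable fractional thermistor problem $$u^{(\alpha)}(t)=g(t,u(t)),\quad t\in[a,T],\qquad u(a)=u_a,$$ then this problem has a solution $u\in C^{(\alpha)}([a,T],\mathbb{R})$ satisfying $|u(t)-v(t)|\le M(t)$ for all $t\in[a,T]$.
   Context: Conformable fractional derivative: for $\alpha\in(0,1)$ and $h:[0,\infty)\to\mathbb{R}$, $h^{(\alpha)}(t):=\lim_{\epsilon\to0}\frac{h(t+\epsilon t^{1-\alpha})-h(t)}{\epsilon}$ for $t>0$; $h$ is $\alpha$-differentiable if this limit exists. $C^{(\alpha)}([a,T],X)$ denotes the set of functions $[a,T]\to X$ that are $\alpha$-differentiable with continuous $\alpha$-derivative. A pair $(v,M)\in C^{(\alpha)}([a,T],\mathbb{R})\times C^{(\alpha)}([a,T],[0,\infty))$ is a tube solution of $u^{(\alpha)}=g(t,u(t))$, $u(a)=u_a$, if: (i) $(y(t)-v(t))\,(g(t,y(t))-v^{(\alpha)}(t))\le M(t)M^{(\alpha)}(t)$ for every $t\in[a,T]$ and every function $y$ with $|y(t)-v(t)|=M(t)$;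 (ii) $v^{(\alpha)}(t)=g(t,v(t))$ and $M^{(\alpha)}(t)=0$ for all $t\in[a,T]$ with $M(t)=0$; (iii) $|u_a-v(a)|\le M(a)$. *)

(* Defs.v *)
From Stdlib Require Import Reals.
From Coquelicot Require Import Coquelicot.
Open Scope R_scope.

(* Conformable fractional derivative of order alpha of h at t (t in [a,T],
   a > 0), for a function considered only on [a,T]:
     lim_{eps -> 0} (h (t + eps t^(1-alpha)) - h t) / eps = l,
   where eps ranges over nonzero values keeping t + eps t^(1-alpha) in [a,T]
   (so the limit is one-sided at the endpoints). *)
Definition conf_deriv_at (alpha a T : R) (h : R -> R) (t l : R) : Prop :=
  filterlim (fun eps => (h (t + eps * Rpower t (1 - alpha)) - h t) / eps)
    (within (fun eps => eps <> 0 /\ a <= t + eps * Rpower t (1 - alpha) <= T)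
       (locally 0))
    (locally l).

Definition continuous_on_ab (a T : R) (d : R -> R) : Prop :=
  forall t, a <= t <= T ->
    filterlim d (within (fun x => a <= x <= T) (locally t)) (locally (d t)).

Definition C_alpha (alpha a T : R) (h dh : R -> R) : Prop :=
  (forall t, a <= t <= T -> conf_deriv_at alpha a T h t (dh t)) /\
  continuous_on_ab a T dh.

Definition continuous_on_strip (a T : R) (f : R -> R -> R) : Prop :=
  forall t x, a <= t <= T ->
    filterlim (fun p : R * R => f (fst p) (snd p))
      (within (fun p : R * R => a <= fst p <= T) (locally (t, x)))
      (locally (f t x)).

Definition thermistor_g (lambda a T : R) (f : R -> R -> R) (w : R -> R) (t : R) : R :=
  lambda * f t (w t) / (RInt (fun x => f x (w x)) a T) ^ 2.

(* In (i), y ranges over the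
   functions for which g(t, y(t)) is defined, i.e. x |-> f(x, y(x)) is
   Riemann integrable on [a,T]. *)
Definition tube_solution (alpha lambda a T ua : R) (f : R -> R -> R)
    (v dv M dM : R -> R) : Prop :=
  (forall t (y : R -> R), a <= t <= T ->
     ex_RInt (fun x => f x (y x)) a T ->
     Rabs (y t - v t) = M t ->
     (y t - v t) * (thermistor_g lambda a T f y t - dv t) <= M t * dM t) /\
  (forall t, a <= t <= T -> M t = 0 ->
     dv t = thermistor_g lambda a T f v t /\ dM t = 0) /\
  Rabs (ua - v a) <= M a.

(* Main.v *)
Require Import Defs.
From Stdlib Require Import Reals.
From Coquelicot Require Import Coquelicot.
From Stdlib Require Import Lra Lia ClassicalEpsilon Classical.
From mathcomp Require all_boot boolp classical_sets filter.
Open Scope R_scope.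

Module UltraM.
Import mathcomp.boot.all_boot mathcomp.classical.boolp mathcomp.classical.classical_sets mathcomp.classical.filter.
Local Open Scope classical_set_scope.

Lemma ultra_exists : exists U : (nat -> Prop) -> Prop,
  (forall P Q : nat -> Prop, (forall n, P n -> Q n) -> U P -> U Q) /\
  (forall P Q : nat -> Prop, U P -> U Q -> U (fun n => P n /\ Q n)) /\
  ~ U (fun _ => False) /\
  (forall P : nat -> Prop, U P \/ U (fun n => ~ P n)) /\
  (forall N : nat, U (fun n => (N <= n)%coq_nat)).
Proof.
have [G [GU sFG]] := ultraFilterLemma (@eventually_filter).
exists G; split; [|split; [|split; [|split]]].
- move=> P Q PQ GP; exact: (filterS PQ GP).
- move=> P Q GP GQ; exact: (filterI GP GQ).
- exact: (filter_not_empty G).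
- move=> P; exact: (in_ultra_setVsetC P GU).
- move=> N; apply: sFG; exists N => // n /= /leP //.
Qed.
End UltraM.

Ltac rabs := unfold Rabs in *; repeat match goal with
  | |- context [Rcase_abs ?x] => destruct (Rcase_abs x)
  | H : context [Rcase_abs ?x] |- _ => destruct (Rcase_abs x) end; try lra.
Ltac rmm := unfold Rmax, Rmin in *; repeat match goal with
  | |- context [Rle_dec ?x ?y] => destruct (Rle_dec x y)
  | H : context [Rle_dec ?x ?y] |- _ => destruct (Rle_dec x y) end; try lra.

Lemma exists_nat_gt (x : R) : exists N : nat, x < INR N.
Proof.
  destruct (INR_archimed 1 x ltac:(lra)) as [n Hn]. exists n. lra.
Qed.

Definition isU (U : (nat -> Prop) -> Prop) :=
  (forall P Q : nat -> Prop, (forall n, P n -> Q n) -> U P -> U Q) /\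
  (forall P Q : nat -> Prop, U P -> U Q -> U (fun n => P n /\ Q n)) /\
  ~ U (fun _ => False) /\
  (forall P : nat -> Prop, U P \/ U (fun n => ~ P n)) /\
  (forall N : nat, U (fun n => (N <= n)%nat)).

Section Ultra.
Variable U : (nat -> Prop) -> Prop.
Hypothesis HU : isU U.
Lemma Umono : forall P Q : nat -> Prop, (forall n, P n -> Q n) -> U P -> U Q.
Proof. apply HU. Qed.
Lemma Uand : forall P Q : nat -> Prop, U P -> U Q -> U (fun n => P n /\ Q n).
Proof. apply HU. Qed.
Lemma Unf : ~ U (fun _ => False).
Proof. apply HU. Qed.
Lemma Uul : forall P : nat -> Prop, U P \/ U (fun n => ~ P n).
Proof. apply HU. Qed.
Lemma Ucof : forall N : nat, U (fun n => (N <= n)%nat).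
Proof. apply HU. Qed.

Lemma Ump (P Q : nat -> Prop) : U P -> (forall n, P n -> Q n) -> U Q.
Proof. intros H1 H2. exact (Umono P Q H2 H1). Qed.

Lemma U_true : U (fun _ => True).
Proof. apply (Umono _ _ (fun _ _ => I) (Ucof 0)). Qed.

Lemma U_ex (P : nat -> Prop) : U P -> exists n, P n.
Proof.
  intros H. apply NNPP. intros H'. apply Unf. apply (Umono P); auto.
  intros n Pn. apply H'. eauto.
Qed.

Lemma U_all (P : nat -> Prop) : (forall n, P n) -> U P.
Proof. intros H. apply (Umono _ _ (fun n _ => H n) U_true). Qed.

Lemma ulim_ex (x : nat -> R) lo hi : U (fun n => lo <= x n <= hi) ->
  exists l, lo <= l <= hi /\ forall e, 0 < e -> U (fun n => Rabs (x n - l) < e).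
Proof.
  intros Hb.
  set (E := fun r => U (fun n => r <= x n)).
  assert (HE : bound E).
  { exists hi. intros r Er. destruct (Rle_dec r hi) as [|Hn]; auto.
    exfalso. apply Unf. apply (Ump _ _ (Uand _ _ Er Hb)). intros n [H1 H2]. lra. }
  assert (HE2 : exists r, E r).
  { exists lo. apply (Ump _ _ Hb). intros n H; lra. }
  destruct (completeness E HE HE2) as [l [Hub Hlub]].
  exists l. split; [split|].
  - apply Hub. apply (Ump _ _ Hb). intros n H; lra.
  - apply Hlub. intros r Er. destruct (Rle_dec r hi) as [|Hn]; auto.
    exfalso. apply Unf. apply (Ump _ _ (Uand _ _ Er Hb)). intros n [H1 H2]. lra.
  - intros e He.
    assert (H1 : exists r, E r /\ l - e < r).
    { apply NNPP. intros Hn. assert (l <= l - e); [|lra].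
      apply Hlub. intros r Er. destruct (Rle_dec r (l - e)) as [|Hr]; auto.
      exfalso. apply Hn. exists r. split; auto. lra. }
    destruct H1 as [r [Er Hr]].
    assert (H2 : U (fun n => x n < l + e / 2)).
    { destruct (Uul (fun n => l + e / 2 <= x n)) as [H|H].
      - assert (l + e / 2 <= l) by (apply Hub; exact H). lra.
      - apply (Ump _ _ H). intros n Hn. lra. }
    apply (Ump _ _ (Uand _ _ Er H2)). intros n [Ha Hb']. rabs.
Qed.

Definition Ucv (x : nat -> R) (l : R) := forall e, 0 < e -> U (fun n => Rabs (x n - l) < e).

Lemma Ucv_le (x : nat -> R) l b : Ucv x l -> U (fun n => x n <= b) -> l <= b.
Proof.
  intros Hc Hb. destruct (Rle_dec l b) as [|Hn]; auto. exfalso.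
  destruct (U_ex _ (Uand _ _ (Hc (l - b) ltac:(lra)) Hb)) as [n [H1 H2]]. rabs.
Qed.

Lemma Ucv_ge (x : nat -> R) l b : Ucv x l -> U (fun n => b <= x n) -> b <= l.
Proof.
  intros Hc Hb. destruct (Rle_dec b l) as [|Hn]; auto. exfalso.
  destruct (U_ex _ (Uand _ _ (Hc (b - l) ltac:(lra)) Hb)) as [n [H1 H2]]. rabs.
Qed.

Lemma Ucv_const_eq (x : nat -> R) l b : Ucv x l -> (forall n, x n = b) -> l = b.
Proof.
  intros Hc Hb. apply Rle_antisym.
  apply (Ucv_le x); auto; apply U_all; intros n; rewrite Hb; lra.
  apply (Ucv_ge x); auto; apply U_all; intros n; rewrite Hb; lra.
Qed.

Lemma U_small (L : R) : forall d, 0 < d -> U (fun n => Rabs (L / INR (S n)) < d).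
Proof.
  intros d Hd. destruct (exists_nat_gt (Rabs L / d)) as [N HN].
  apply (Ump _ _ (Ucof N)). intros n Hn.
  assert (HS : 0 < INR (S n)) by (apply lt_0_INR; lia).
  assert (INR N <= INR n) by (apply le_INR; exact Hn).
  rewrite S_INR in HS |- *.
  unfold Rdiv. rewrite Rabs_mult. rewrite Rabs_inv. rewrite (Rabs_right (INR n + 1)) by lra.
  apply (Rmult_lt_reg_r (INR n + 1)); [lra|]. rewrite Rmult_assoc, Rinv_l by lra.
  assert (Rabs L / d * d = Rabs L) by (field; lra).
  assert (Rabs L < d * (INR n + 1)); [|lra].
  assert (Rabs L / d < INR n + 1) by lra.
  apply (Rmult_lt_compat_r d) in H1; auto. lra.
Qed.

End Ultra.

Definition ct (g : R -> R) (x : R) := forall e, 0 < e -> exists d, 0 < d /\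
  forall y, Rabs (y - x) < d -> Rabs (g y - g x) < e.
Definition ct2 (F : R -> R -> R) (x z : R) := forall e, 0 < e -> exists d, 0 < d /\
  forall x' z', Rabs (x' - x) < d -> Rabs (z' - z) < d -> Rabs (F x' z' - F x z) < e.

Lemma ct_cpt g x : ct g x <-> continuity_pt g x.
Proof.
  split.
  - intros H e He. destruct (H e He) as [d [Hd Hd']]. exists d. split; auto.
    intros y [_ Hy]. simpl in *. unfold R_dist in *. apply Hd'; auto.
  - intros H e He. destruct (H e He) as [d [Hd Hd']]. exists d. split; auto.
    intros y Hy. destruct (Req_dec y x) as [->|Hne].
    + rewrite Rminus_diag, Rabs_R0; auto.
    + apply (Hd' y). split; auto. split. exact I. now apply not_eq_sym.
Qed.

Lemma ct_continuous g x : ct g x -> continuous g x.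
Proof. intros H. apply continuity_pt_filterlim. now apply ct_cpt. Qed.

Lemma ct2_comp F g1 g2 x : ct2 F (g1 x) (g2 x) -> ct g1 x -> ct g2 x ->
  ct (fun y => F (g1 y) (g2 y)) x.
Proof.
  intros HF H1 H2 e He. destruct (HF e He) as [d [Hd Hd']].
  destruct (H1 d Hd) as [d1 [Hd1 Hd1']]. destruct (H2 d Hd) as [d2 [Hd2 Hd2']].
  exists (Rmin d1 d2). split. apply Rmin_pos; auto.
  intros y Hy. apply Hd'. apply Hd1'. rmm. apply Hd2'. rmm.
Qed.

Lemma ct_plus g1 g2 x : ct g1 x -> ct g2 x -> ct (fun y => g1 y + g2 y) x.
Proof. intros; apply ct_cpt; apply continuity_pt_plus; now apply ct_cpt. Qed.
Lemma ct_minus g1 g2 x : ct g1 x -> ct g2 x -> ct (fun y => g1 y - g2 y) x.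
Proof. intros; apply ct_cpt; apply continuity_pt_minus; now apply ct_cpt. Qed.
Lemma ct_mult g1 g2 x : ct g1 x -> ct g2 x -> ct (fun y => g1 y * g2 y) x.
Proof. intros; apply ct_cpt; apply continuity_pt_mult; now apply ct_cpt. Qed.
Lemma ct_const c x : ct (fun _ => c) x.
Proof. apply ct_cpt; apply continuity_pt_const. intros ? ?; auto. Qed.
Lemma ct_id x : ct (fun y => y) x.
Proof. apply ct_cpt; apply continuity_pt_id. Qed.
Lemma ct_opp g x : ct g x -> ct (fun y => - g y) x.
Proof. intros; apply ct_cpt; apply continuity_pt_opp; now apply ct_cpt. Qed.

Lemma Rmax_lip a1 b1 a2 b2 : Rabs (Rmax a1 b1 - Rmax a2 b2) <= Rmax (Rabs (a1 - a2)) (Rabs (b1 - b2)).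
Proof. rmm; rabs. Qed.
Lemma Rmin_lip a1 b1 a2 b2 : Rabs (Rmin a1 b1 - Rmin a2 b2) <= Rmax (Rabs (a1 - a2)) (Rabs (b1 - b2)).
Proof. rmm; rabs. Qed.

Lemma ct_Rmax g1 g2 x : ct g1 x -> ct g2 x -> ct (fun y => Rmax (g1 y) (g2 y)) x.
Proof.
  intros H1 H2 e He. destruct (H1 e He) as [d1 [Hd1 Hd1']]. destruct (H2 e He) as [d2 [Hd2 Hd2']].
  exists (Rmin d1 d2). split. apply Rmin_pos; auto. intros y Hy.
  eapply Rle_lt_trans. apply Rmax_lip. apply Rmax_lub_lt. apply Hd1'; rmm. apply Hd2'; rmm.
Qed.
Lemma ct_Rmin g1 g2 x : ct g1 x -> ct g2 x -> ct (fun y => Rmin (g1 y) (g2 y)) x.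
Proof.
  intros H1 H2 e He. destruct (H1 e He) as [d1 [Hd1 Hd1']]. destruct (H2 e He) as [d2 [Hd2 Hd2']].
  exists (Rmin d1 d2). split. apply Rmin_pos; auto. intros y Hy.
  eapply Rle_lt_trans. apply Rmin_lip. apply Rmax_lub_lt. apply Hd1'; rmm. apply Hd2'; rmm.
Qed.

Lemma ct_comp g1 g2 x : ct g1 (g2 x) -> ct g2 x -> ct (fun y => g1 (g2 y)) x.
Proof. intros; apply ct_cpt; apply continuity_pt_comp; now apply ct_cpt. Qed.

Lemma ct2_mul_ct (F : R -> R -> R) (g : R -> R) x0 z0 c0 : ct2 F x0 z0 -> ct g c0 ->
  forall e, 0 < e -> exists d, 0 < d /\ forall x z c, Rabs (x - x0) < d -> Rabs (z - z0) < d ->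
   Rabs (c - c0) < d -> Rabs (F x z * g c - F x0 z0 * g c0) < e.
Proof.
  intros HF Hg e He.
  set (A := Rabs (F x0 z0) + 1). set (B := Rabs (g c0) + 1).
  assert (HA : 0 < A) by (unfold A; pose proof (Rabs_pos (F x0 z0)); lra).
  assert (HB : 0 < B) by (unfold B; pose proof (Rabs_pos (g c0)); lra).
  set (e1 := Rmin 1 (e / (4 * B))). set (e2 := Rmin 1 (e / (4 * A))).
  assert (He1 : 0 < e1) by (apply Rmin_pos; [lra| apply Rdiv_lt_0_compat; lra]).
  assert (He2 : 0 < e2) by (apply Rmin_pos; [lra| apply Rdiv_lt_0_compat; lra]).
  destruct (HF e1 He1) as [d1 [Hd1 Hd1']]. destruct (Hg e2 He2) as [d2 [Hd2 Hd2']].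
  exists (Rmin d1 d2). split. apply Rmin_pos; auto.
  intros x z c Hx Hz Hc.
  assert (H1 : Rabs (F x z - F x0 z0) < e1) by (apply Hd1'; rmm).
  assert (H2 : Rabs (g c - g c0) < e2) by (apply Hd2'; rmm).
  replace (F x z * g c - F x0 z0 * g c0) with ((F x z - F x0 z0) * g c + F x0 z0 * (g c - g c0)) by ring.
  eapply Rle_lt_trans. apply Rabs_triang. rewrite !Rabs_mult.
  assert (Hgc : Rabs (g c) <= B).
  { unfold B. assert (e2 <= 1) by apply Rmin_l. rabs. }
  assert (e1 <= e / (4 * B)) by apply Rmin_r. assert (e2 <= e / (4 * A)) by apply Rmin_r.
  assert (Rabs (F x z - F x0 z0) * Rabs (g c) <= e1 * B).
  { apply Rmult_le_compat; try apply Rabs_pos; lra. }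
  assert (Rabs (F x0 z0) * Rabs (g c - g c0) <= A * e2).
  { apply Rmult_le_compat; try apply Rabs_pos; unfold A; lra. }
  assert (e1 * B <= e / 4).
  { apply (Rmult_le_compat_r B) in H; [|lra]. replace (e / (4 * B) * B) with (e / 4) in H by (field; lra). lra. }
  assert (A * e2 <= e / 4).
  { apply (Rmult_le_compat_l A) in H0; [|lra]. replace (A * (e / (4 * A))) with (e / 4) in H0 by (field; lra). lra. }
  lra.
Qed.

Section Poly.
Variables (a0 ua0 hh : R) (sl : R -> R -> R).
Hypothesis Hhh : 0 < hh.

Definition nd (i : nat) := a0 + INR i * hh.
Definition clp (x : R) := Rmax 0 (Rmin hh x).
Definition Wf (j : nat) (x : R) := Rmax 0 (Rmin (INR j * hh) (x - a0)).

Fixpoint poly (j : nat) : R -> R :=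
  match j with
  | O => fun _ => ua0
  | S j' => fun x => poly j' x + sl (nd j') (poly j' (nd j')) * clp (x - nd j')
  end.

Lemma clp_mono x y : x <= y -> clp x <= clp y.
Proof. unfold clp; rmm. Qed.
Lemma clp_bnd x : 0 <= clp x <= hh.
Proof. unfold clp; rmm. Qed.

Lemma INR_hh_nonneg j : 0 <= INR j * hh.
Proof. apply Rmult_le_pos; [apply pos_INR|lra]. Qed.

Lemma Wf_S j x : Wf (S j) x = Wf j x + clp (x - nd j).
Proof.
  unfold Wf, clp, nd. rewrite S_INR, Rmult_plus_distr_r, Rmult_1_l.
  pose proof (INR_hh_nonneg j). set (p := INR j * hh) in *. rmm.
Qed.

Lemma active x y i : clp (y - nd i) - clp (x - nd i) > 0 -> x - hh < nd i < y.
Proof. unfold clp. set (q := nd i). rmm. Qed.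

Lemma slope_lemma j : forall x y A e, x <= y ->
  (forall i, (i < j)%nat -> clp (y - nd i) - clp (x - nd i) > 0 ->
       Rabs (sl (nd i) (poly i (nd i)) - A) <= e) ->
  Rabs (poly j y - poly j x - A * (Wf j y - Wf j x)) <= e * (Wf j y - Wf j x).
Proof.
  induction j as [|j IH]; intros x y A e Hxy Hs.
  - simpl. unfold Wf. simpl. rewrite Rmult_0_l. rmm; rabs.
  - simpl. rewrite !Wf_S.
    assert (Hw : 0 <= clp (y - nd j) - clp (x - nd j)) by (pose proof (clp_mono (x - nd j) (y - nd j)); lra).
    specialize (IH x y A e Hxy (fun i Hi => Hs i ltac:(lia))).
    set (w := clp (y - nd j) - clp (x - nd j)) in *.
    set (s := sl (nd j) (poly j (nd j))).
    replace (poly j y + s * clp (y - nd j) - (poly j x + s * clp (x - nd j)) -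
       A * (Wf j y + clp (y - nd j) - (Wf j x + clp (x - nd j))))
      with ((poly j y - poly j x - A * (Wf j y - Wf j x)) + (s - A) * w) by (unfold w; ring).
    eapply Rle_trans. apply Rabs_triang. rewrite Rabs_mult, (Rabs_right w) by lra.
    assert (Rabs (s - A) * w <= e * w).
    { destruct (Req_dec w 0) as [H0|H0]. rewrite H0; lra.
      apply Rmult_le_compat_r; [lra|]. apply Hs; [lia|]. unfold w in H0, Hw. lra. }
    unfold w in *. lra.
Qed.

Lemma poly_node i k : poly (i + k) (nd i) = poly i (nd i).
Proof.
  induction k as [|k IH].
  - now rewrite Nat.add_0_r.
  - rewrite Nat.add_succ_r. simpl. rewrite IH.
    assert (clp (nd i - nd (i + k)) = 0).
    { unfold clp, nd. rewrite plus_INR. pose proof (INR_hh_nonneg k).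
      replace (a0 + INR i * hh - (a0 + (INR i + INR k) * hh)) with (- (INR k * hh)) by ring. rmm. }
    rewrite H. ring.
Qed.

Lemma poly_node' i j : (i <= j)%nat -> poly j (nd i) = poly i (nd i).
Proof. intros H. replace j with (i + (j - i))%nat by lia. apply poly_node. Qed.

Lemma poly_a j : poly j a0 = ua0.
Proof.
  induction j as [|j IH]; simpl; auto. rewrite IH.
  assert (clp (a0 - nd j) = 0).
  { unfold clp, nd. pose proof (INR_hh_nonneg j).
    replace (a0 - (a0 + INR j * hh)) with (- (INR j * hh)) by ring. rmm. }
  rewrite H; ring.
Qed.

Lemma Wf_full j x : a0 <= x <= a0 + INR j * hh -> Wf j x = x - a0.
Proof. intros H. unfold Wf. rmm. Qed.

Lemma ct_poly j x : ct (poly j) x.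
Proof.
  revert x. induction j as [|j IH]; intros x; simpl.
  - apply ct_const.
  - apply ct_plus. apply IH. apply ct_mult. apply ct_const.
    unfold clp. apply ct_Rmax. apply ct_const. apply ct_Rmin. apply ct_const.
    apply ct_minus. apply ct_id. apply ct_const.
Qed.

Lemma poly_lip j B : (forall x z, Rabs (sl x z) <= B) ->
  forall x y, x <= y -> Rabs (poly j y - poly j x) <= B * (Wf j y - Wf j x).
Proof.
  intros HB x y Hxy. pose proof (slope_lemma j x y 0 B Hxy) as H.
  rewrite Rmult_0_l, Rminus_0_r in H. apply H. intros i _ _. rewrite Rminus_0_r. apply HB.
Qed.

End Poly.

Lemma poly_cont_param (a0 ua0 hh : R) (slc : R -> R -> R -> R) (c0 : R) :
  0 < hh ->
  (forall x z, forall e, 0 < e -> exists d, 0 < d /\ forall c z', Rabs (c - c0) < d ->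
      Rabs (z' - z) < d -> Rabs (slc c x z' - slc c0 x z) < e) ->
  forall j e, 0 < e -> exists d, 0 < d /\ forall c, Rabs (c - c0) < d -> forall x,
     Rabs (poly a0 ua0 hh (slc c) j x - poly a0 ua0 hh (slc c0) j x) < e.
Proof.
  intros Hh Hc j. induction j as [|j IH]; intros e He.
  - exists 1. split. lra. intros c _ x. simpl. rewrite Rminus_diag, Rabs_R0. auto.
  - set (z0 := poly a0 ua0 hh (slc c0) j (nd a0 hh j)).
    destruct (Hc (nd a0 hh j) z0 (e / (2 * hh)) ltac:(apply Rdiv_lt_0_compat; lra)) as [d1 [Hd1 Hd1']].
    destruct (IH (Rmin (e / 2) d1) ltac:(apply Rmin_pos; lra)) as [d2 [Hd2 Hd2']].
    exists (Rmin d1 d2). split. apply Rmin_pos; auto.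
    intros c Hcc x. simpl.
    assert (Hp1 : Rabs (poly a0 ua0 hh (slc c) j x - poly a0 ua0 hh (slc c0) j x) < e / 2).
    { eapply Rlt_le_trans. apply Hd2'. rmm. apply Rmin_l. }
    assert (Hs : Rabs (slc c (nd a0 hh j) (poly a0 ua0 hh (slc c) j (nd a0 hh j)) -
                       slc c0 (nd a0 hh j) z0) < e / (2 * hh)).
    { apply Hd1'. rmm. eapply Rlt_le_trans. apply Hd2'. rmm. apply Rmin_r. }
    fold z0.
    set (s1 := slc c (nd a0 hh j) (poly a0 ua0 hh (slc c) j (nd a0 hh j))) in *.
    set (s0 := slc c0 (nd a0 hh j) z0) in *.
    pose proof (clp_bnd hh Hh (x - nd a0 hh j)).
    set (w := clp hh (x - nd a0 hh j)) in *.
    replace (poly a0 ua0 hh (slc c) j x + s1 * w - (poly a0 ua0 hh (slc c0) j x + s0 * w))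
      with ((poly a0 ua0 hh (slc c) j x - poly a0 ua0 hh (slc c0) j x) + (s1 - s0) * w) by ring.
    eapply Rle_lt_trans. apply Rabs_triang. rewrite Rabs_mult, (Rabs_right w) by lra.
    assert (Rabs (s1 - s0) * w <= e / (2 * hh) * hh).
    { apply Rmult_le_compat; try apply Rabs_pos; lra. }
    replace (e / (2 * hh) * hh) with (e / 2) in H0 by (field; lra). lra.
Qed.

Lemma ballR x e y : @ball R_UniformSpace x e y <-> Rabs (y - x) < e.
Proof. reflexivity. Qed.

Lemma filterlim_within_eps (F : R -> R) (D : R -> Prop) (x0 l : R) :
  filterlim F (within D (locally x0)) (locally l) <->
  (forall e, 0 < e -> exists d, 0 < d /\ forall y, D y -> Rabs (y - x0) < d -> Rabs (F y - l) < e).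
Proof.
  split.
  - intros H e He. rewrite filterlim_locally in H. destruct (H (mkposreal e He)) as [d Hd].
    exists d. split. apply cond_pos. intros y Dy Hy. apply (Hd y). exact Hy. exact Dy.
  - intros H. apply filterlim_locally. intros [e He]. destruct (H e He) as [d [Hd Hd']].
    exists (mkposreal d Hd). intros y Hy Dy. apply Hd'; auto.
Qed.

Section Main.
Variables (alpha a T lambda ua : R) (f : R -> R -> R) (v dv M dM : R -> R).
Hypotheses (Halpha : 0 < alpha < 1) (Ha : 0 < a) (HaT : a < T) (Hlam : 0 < lambda)
  (Hf : continuous_on_strip a T f) (Hfpos : forall t x, a <= t <= T -> 0 < f t x)
  (Hv : C_alpha alpha a T v dv) (HM : C_alpha alpha a T M dM)
  (HM0 : forall t, a <= t <= T -> 0 <= M t)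
  (Htube : tube_solution alpha lambda a T ua f v dv M dM).

Definition cl x := Rmax a (Rmin T x).
Lemma cl_in x : a <= cl x <= T.
Proof. unfold cl; rmm. Qed.
Lemma cl_id x : a <= x <= T -> cl x = x.
Proof. unfold cl; rmm. Qed.
Lemma cl_lip x y : Rabs (cl x - cl y) <= Rabs (x - y).
Proof. unfold cl; rmm; rabs. Qed.

Lemma cl_ct x : ct cl x.
Proof.
  intros e He. exists e. split; auto. intros y Hy. eapply Rle_lt_trans. apply cl_lip. auto.
Qed.

Definition ctw (g : R -> R) (x : R) := forall e, 0 < e -> exists d, 0 < d /\
  forall y, a <= y <= T -> Rabs (y - x) < d -> Rabs (g y - g x) < e.

Lemma ctw_cl g : (forall x, a <= x <= T -> ctw g x) -> forall x, ct (fun y => g (cl y)) x.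
Proof.
  intros H x e He. destruct (H (cl x) (cl_in x) e He) as [d [Hd Hd']].
  exists d. split; auto. intros y Hy. apply Hd'. apply cl_in.
  eapply Rle_lt_trans. apply cl_lip. auto.
Qed.

Lemma ct_ctw g x : ct g x -> ctw g x.
Proof. intros H e He. destruct (H e He) as [d [Hd Hd']]. exists d; split; auto. Qed.

Lemma f_ct2 t z : a <= t <= T -> forall e, 0 < e -> exists d, 0 < d /\
  forall t' z', a <= t' <= T -> Rabs (t' - t) < d -> Rabs (z' - z) < d -> Rabs (f t' z' - f t z) < e.
Proof.
  intros Ht e He. pose proof (Hf t z Ht) as H. rewrite filterlim_locally in H.
  destruct (H (mkposreal e He)) as [d Hd].
  exists d. split. apply cond_pos. intros t' z' Ht' H1 H2.
  apply (Hd (t', z')). split; auto. exact Ht'.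
Qed.

Definition fh x z := f (cl x) z.
Lemma fh_ct2 x z : ct2 fh x z.
Proof.
  intros e He. destruct (f_ct2 (cl x) z (cl_in x) e He) as [d [Hd Hd']].
  exists d. split; auto. intros x' z' H1 H2. apply Hd'; auto. apply cl_in.
  eapply Rle_lt_trans. apply cl_lip. auto.
Qed.

Definition pw t := Rpower t (1 - alpha).
Definition Kf x := Rpower (cl x) (alpha - 1).

Lemma pw_pos t : 0 < pw t.
Proof. unfold pw, Rpower. apply exp_pos. Qed.
Lemma Kf_pos x : 0 < Kf x.
Proof. unfold Kf, Rpower. apply exp_pos. Qed.
Lemma Kf_pw t : a <= t <= T -> Kf t * pw t = 1.
Proof.
  intros Ht. unfold Kf, pw. rewrite cl_id by auto. rewrite <- Rpower_plus.
  replace (alpha - 1 + (1 - alpha)) with 0 by ring. apply Rpower_O. lra.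
Qed.
Lemma Kf_le x : Kf x <= Rpower a (alpha - 1).
Proof.
  unfold Kf, Rpower. destruct (cl_in x) as [H1 H2].
  destruct (Req_dec (cl x) a) as [->|Hne]. lra.
  left. apply exp_increasing. assert (ln a < ln (cl x)) by (apply ln_increasing; lra).
  assert (alpha - 1 < 0) by lra. nra.
Qed.
Lemma Kf_ct x : ct Kf x.
Proof.
  unfold Kf. apply (ct_comp (fun y => Rpower y (alpha - 1)) cl).
  - apply ct_cpt. apply derivable_continuous_pt.
    exists ((alpha - 1) * Rpower (cl x) (alpha - 1 - 1)). apply derivable_pt_lim_power.
    destruct (cl_in x); lra.
  - apply cl_ct.
Qed.

Definition wder (h : R -> R) (t D : R) := forall e, 0 < e -> exists d, 0 < d /\
  forall t', a <= t' <= T -> Rabs (t' - t) < d -> Rabs (h t' - h t - D * (t' - t)) <= e * Rabs (t' - t).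

Lemma wder_ctw h t D : wder h t D -> ctw h t.
Proof.
  intros H e He. destruct (H 1 ltac:(lra)) as [d [Hd Hd']].
  exists (Rmin d (e / (Rabs D + 2))). split.
  apply Rmin_pos; auto. apply Rdiv_lt_0_compat; [lra|]. pose proof (Rabs_pos D); lra.
  intros y Hy Hyt.
  assert (Hyd : Rabs (y - t) < d) by (eapply Rlt_le_trans; [exact Hyt|apply Rmin_l]).
  specialize (Hd' y Hy Hyd).
  assert (Hye : Rabs (y - t) < e / (Rabs D + 2)) by (eapply Rlt_le_trans; [exact Hyt|apply Rmin_r]).
  pose proof (Rabs_pos D). pose proof (Rabs_pos (y - t)).
  assert (Rabs (h y - h t) <= (Rabs D + 1) * Rabs (y - t)).
  { replace (h y - h t) with ((h y - h t - D * (y - t)) + D * (y - t)) by ring.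
    eapply Rle_trans. apply Rabs_triang. rewrite Rabs_mult. lra. }
  assert ((Rabs D + 2) * Rabs (y - t) < e).
  { apply (Rmult_lt_compat_l (Rabs D + 2)) in Hye; [|lra].
    replace ((Rabs D + 2) * (e / (Rabs D + 2))) with e in Hye by (field; lra). lra. }
  nra.
Qed.

Lemma conf_eps (h : R -> R) t l : conf_deriv_at alpha a T h t l <->
  (forall e, 0 < e -> exists d, 0 < d /\ forall eps, eps <> 0 /\ a <= t + eps * pw t <= T ->
     Rabs (eps - 0) < d -> Rabs ((h (t + eps * pw t) - h t) / eps - l) < e).
Proof. unfold conf_deriv_at. apply filterlim_within_eps. Qed.

Lemma conf_to_wder h t l : a <= t <= T -> conf_deriv_at alpha a T h t l -> wder h t (Kf t * l).
Proof.
  intros Ht H e He. rewrite conf_eps in H.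
  pose proof (pw_pos t) as Hp. pose proof (Kf_pw t Ht) as HKp.
  destruct (H (e * pw t) ltac:(apply Rmult_lt_0_compat; lra)) as [d [Hd Hd']].
  exists (d * pw t). split. apply Rmult_lt_0_compat; lra.
  intros t' Ht' Htd.
  destruct (Req_dec t' t) as [->|Hne].
  { rewrite !Rminus_diag, Rmult_0_r, Rminus_0_r, Rabs_R0. lra. }
  set (eps := (t' - t) / pw t).
  assert (Heps : t + eps * pw t = t') by (unfold eps; field; lra).
  assert (Hne0 : eps <> 0).
  { unfold eps. intros H0. apply Hne. apply Rminus_diag_uniq.
    apply (Rmult_eq_reg_r (/ pw t)). rewrite Rmult_0_l. exact H0. apply Rinv_neq_0_compat. lra. }
  assert (Habs : Rabs eps * pw t = Rabs (t' - t)).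
  { unfold eps. unfold Rdiv. rewrite Rabs_mult, Rabs_inv, (Rabs_right (pw t)) by lra. field. lra. }
  specialize (Hd' eps). rewrite Heps in Hd'.
  assert (Hlt : Rabs (eps - 0) < d).
  { rewrite Rminus_0_r. apply (Rmult_lt_reg_r (pw t)); auto. lra. }
  specialize (Hd' (conj Hne0 Ht') Hlt).
  assert (E1 : h t' - h t - Kf t * l * (t' - t) = eps * ((h t' - h t) / eps - l)).
  { replace (t' - t) with (eps * pw t) by (rewrite <- Heps; ring).
    field_simplify; auto. replace (Kf t * l * eps * pw t) with (l * eps * (Kf t * pw t)) by ring.
    rewrite HKp. ring. }
  rewrite E1, Rabs_mult.
  assert (0 < Rabs eps) by (apply Rabs_pos_lt; auto).
  assert (Rabs eps * Rabs ((h t' - h t) / eps - l) <= Rabs eps * (e * pw t)) by (apply Rmult_le_compat_l; lra).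
  rewrite <- Habs. nra.
Qed.

Lemma wder_to_conf h t l : a <= t <= T -> wder h t (Kf t * l) -> conf_deriv_at alpha a T h t l.
Proof.
  intros Ht H. rewrite conf_eps. intros e He.
  pose proof (pw_pos t) as Hp. pose proof (Kf_pw t Ht) as HKp.
  destruct (H (e / (2 * pw t)) ltac:(apply Rdiv_lt_0_compat; lra)) as [d [Hd Hd']].
  exists (d / pw t). split. apply Rdiv_lt_0_compat; lra.
  intros eps [Hne Hin] Hlt. rewrite Rminus_0_r in Hlt.
  set (t' := t + eps * pw t) in *.
  assert (Habs : Rabs (t' - t) = Rabs eps * pw t).
  { unfold t'. replace (t + eps * pw t - t) with (eps * pw t) by ring. rewrite Rabs_mult, (Rabs_right (pw t)); lra. }
  assert (Htd : Rabs (t' - t) < d).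
  { rewrite Habs. apply (Rmult_lt_compat_r (pw t)) in Hlt; auto.
    replace (d / pw t * pw t) with d in Hlt by (field; lra). lra. }
  specialize (Hd' t' Hin Htd).
  assert (E1 : (h t' - h t) / eps - l = (h t' - h t - Kf t * l * (t' - t)) / eps).
  { replace (t' - t) with (eps * pw t) by (unfold t'; ring).
    replace (Kf t * l * (eps * pw t)) with (l * eps * (Kf t * pw t)) by ring.
    rewrite HKp. field. auto. }
  rewrite E1. unfold Rdiv. rewrite Rabs_mult, Rabs_inv.
  assert (0 < Rabs eps) by (apply Rabs_pos_lt; auto).
  rewrite Habs in Hd'.
  apply (Rmult_le_compat_r (/ Rabs eps)) in Hd'; [|left; apply Rinv_0_lt_compat; auto].
  replace (e / (2 * pw t) * (Rabs eps * pw t) * / Rabs eps) with (e / 2) in Hd' by (field; split; lra).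
  lra.
Qed.


Lemma mychoice {A B : Type} (Rr : A -> B -> Prop) : (forall x, exists y, Rr x y) -> exists g, forall x, Rr x (g x).
Proof.
  intros H. exists (fun x => proj1_sig (constructive_indefinite_description _ (H x))).
  intros x. exact (proj2_sig (constructive_indefinite_description _ (H x))).
Qed.

Lemma v_ctw x : a <= x <= T -> ctw v x.
Proof. intros Hx. apply (wder_ctw _ _ (Kf x * dv x)). apply conf_to_wder; auto. apply (proj1 Hv); auto. Qed.
Lemma M_ctw x : a <= x <= T -> ctw M x.
Proof. intros Hx. apply (wder_ctw _ _ (Kf x * dM x)). apply conf_to_wder; auto. apply (proj1 HM); auto. Qed.

Lemma ctab_ctw g x : continuous_on_ab a T g -> a <= x <= T -> ctw g x.
Proof.
  intros H Hx. specialize (H x Hx). rewrite filterlim_within_eps in H.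
  intros e He. destruct (H e He) as [d [Hd Hd']]. exists d. split; auto.
Qed.

Definition vh x := v (cl x).
Definition Mh x := M (cl x).
Lemma vh_ct x : ct vh x.
Proof. apply (ctw_cl v v_ctw). Qed.
Lemma Mh_ct x : ct Mh x.
Proof. apply (ctw_cl M M_ctw). Qed.
Lemma Mh_nn x : 0 <= Mh x.
Proof. apply HM0, cl_in. Qed.

Definition Pj x z := vh x + Rmax (- Mh x) (Rmin (Mh x) (z - vh x)).

Lemma Pj_in x z : Rabs (Pj x z - vh x) <= Mh x.
Proof. pose proof (Mh_nn x). unfold Pj. rmm; rabs. Qed.
Lemma Pj_id x z : Rabs (z - vh x) <= Mh x -> Pj x z = z.
Proof. pose proof (Mh_nn x). unfold Pj. intros; rmm; rabs. Qed.
Lemma Pj_lip x z z' : Rabs (Pj x z - Pj x z') <= Rabs (z - z').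
Proof. pose proof (Mh_nn x). unfold Pj. rmm; rabs. Qed.
Lemma Pj_up x z : z - vh x > Mh x -> Pj x z = vh x + Mh x.
Proof. pose proof (Mh_nn x). unfold Pj. intros; rmm. Qed.
Lemma Pj_lo x z : z - vh x < - Mh x -> Pj x z = vh x - Mh x.
Proof. pose proof (Mh_nn x). unfold Pj. intros; rmm. Qed.

Lemma ct2_of_ct1 (g : R -> R) x z : ct g x -> ct2 (fun x _ => g x) x z.
Proof. intros H e He. destruct (H e He) as [d [Hd Hd']]. exists d; split; auto. Qed.
Lemma ct2_snd x z : ct2 (fun _ z => z) x z.
Proof. intros e He. exists e; split; auto. Qed.
Lemma ct2_fst x z : ct2 (fun x _ => x) x z.
Proof. intros e He. exists e; split; auto. Qed.

Lemma ct2_comp2 F g1 g2 x z : ct2 F (g1 x z) (g2 x z) -> ct2 g1 x z -> ct2 g2 x z ->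
  ct2 (fun x z => F (g1 x z) (g2 x z)) x z.
Proof.
  intros HF H1 H2 e He. destruct (HF e He) as [d [Hd Hd']].
  destruct (H1 d Hd) as [d1 [Hd1 Hd1']]. destruct (H2 d Hd) as [d2 [Hd2 Hd2']].
  exists (Rmin d1 d2). split. apply Rmin_pos; auto.
  intros x' z' Hx Hz. apply Hd'. apply Hd1'; rmm. apply Hd2'; rmm.
Qed.

Lemma ct2_plus F1 F2 x z : ct2 F1 x z -> ct2 F2 x z -> ct2 (fun x z => F1 x z + F2 x z) x z.
Proof.
  intros H1 H2 e He. destruct (H1 (e/2) ltac:(lra)) as [d1 [Hd1 Hd1']]. destruct (H2 (e/2) ltac:(lra)) as [d2 [Hd2 Hd2']].
  exists (Rmin d1 d2). split. apply Rmin_pos; auto.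
  intros x' z' Hx Hz. specialize (Hd1' x' z' ltac:(rmm) ltac:(rmm)). specialize (Hd2' x' z' ltac:(rmm) ltac:(rmm)). rabs.
Qed.
Lemma ct2_minus F1 F2 x z : ct2 F1 x z -> ct2 F2 x z -> ct2 (fun x z => F1 x z - F2 x z) x z.
Proof.
  intros H1 H2 e He. destruct (H1 (e/2) ltac:(lra)) as [d1 [Hd1 Hd1']]. destruct (H2 (e/2) ltac:(lra)) as [d2 [Hd2 Hd2']].
  exists (Rmin d1 d2). split. apply Rmin_pos; auto.
  intros x' z' Hx Hz. specialize (Hd1' x' z' ltac:(rmm) ltac:(rmm)). specialize (Hd2' x' z' ltac:(rmm) ltac:(rmm)). rabs.
Qed.
Lemma ct2_mult F1 F2 x z : ct2 F1 x z -> ct2 F2 x z -> ct2 (fun x z => F1 x z * F2 x z) x z.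
Proof.
  intros H1 H2 e He.
  destruct (ct2_mul_ct F1 (fun c => c) x z (F2 x z) H1 (ct_id _) e He) as [d1 [Hd1 Hd1']].
  destruct (H2 d1 Hd1) as [d2 [Hd2 Hd2']].
  exists (Rmin d1 d2). split. apply Rmin_pos; auto.
  intros x' z' Hx Hz. apply Hd1'. rmm. rmm. apply Hd2'; rmm.
Qed.
Lemma ct2_Rmax F1 F2 x z : ct2 F1 x z -> ct2 F2 x z -> ct2 (fun x z => Rmax (F1 x z) (F2 x z)) x z.
Proof.
  intros H1 H2 e He. destruct (H1 e He) as [d1 [Hd1 Hd1']]. destruct (H2 e He) as [d2 [Hd2 Hd2']].
  exists (Rmin d1 d2). split. apply Rmin_pos; auto. intros x' z' Hx Hz.
  eapply Rle_lt_trans. apply Rmax_lip. apply Rmax_lub_lt. apply Hd1'; rmm. apply Hd2'; rmm.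
Qed.
Lemma ct2_Rmin F1 F2 x z : ct2 F1 x z -> ct2 F2 x z -> ct2 (fun x z => Rmin (F1 x z) (F2 x z)) x z.
Proof.
  intros H1 H2 e He. destruct (H1 e He) as [d1 [Hd1 Hd1']]. destruct (H2 e He) as [d2 [Hd2 Hd2']].
  exists (Rmin d1 d2). split. apply Rmin_pos; auto. intros x' z' Hx Hz.
  eapply Rle_lt_trans. apply Rmin_lip. apply Rmax_lub_lt. apply Hd1'; rmm. apply Hd2'; rmm.
Qed.

Lemma Pj_ct2 x z : ct2 Pj x z.
Proof.
  unfold Pj. apply ct2_plus. apply ct2_of_ct1, vh_ct.
  apply ct2_Rmax. apply (ct2_of_ct1 (fun x => - Mh x)). apply ct_opp, Mh_ct.
  apply ct2_Rmin. apply ct2_of_ct1, Mh_ct.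
  apply ct2_minus. apply ct2_snd. apply ct2_of_ct1, vh_ct.
Qed.

Definition Hf2 x z := fh x (Pj x z).
Lemma Hf2_ct2 x z : ct2 Hf2 x z.
Proof.
  unfold Hf2. apply (ct2_comp2 fh (fun x _ => x) Pj). apply fh_ct2. apply ct2_fst. apply Pj_ct2.
Qed.

Definition Qt x th := vh x + th * Mh x.
Lemma Qt_ct2 x th : ct2 Qt x th.
Proof.
  unfold Qt. apply ct2_plus. apply ct2_of_ct1, vh_ct. apply ct2_mult. apply ct2_snd. apply ct2_of_ct1, Mh_ct.
Qed.
Lemma Pj_Qt x z : exists th, -1 <= th <= 1 /\ Pj x z = Qt x th.
Proof.
  pose proof (Pj_in x z). pose proof (Mh_nn x). unfold Qt.
  destruct (Req_dec (Mh x) 0) as [Hz0|Hz0].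
  - exists 0. split. lra. rewrite Hz0 in *. assert (Pj x z - vh x = 0) by rabs. lra.
  - exists ((Pj x z - vh x) / Mh x). split.
    + split; [apply (Rmult_le_reg_r (Mh x))|apply (Rmult_le_reg_r (Mh x))]; try lra;
      unfold Rdiv; rewrite Rmult_assoc, Rinv_l by lra; rabs.
    + field. auto.
Qed.

Variable U : (nat -> Prop) -> Prop.
Hypothesis HU : isU U.
Let Ump := Ump U HU.
Let Uand := Uand U HU.
Let Ucof := Ucof U HU.
Let Ucv := Ucv U.

Lemma Ucv_ct2 (F : R -> R -> R) xs ys x y : Ucv xs x -> Ucv ys y -> ct2 F x y ->
  Ucv (fun n => F (xs n) (ys n)) (F x y).
Proof.
  intros H1 H2 HF e He. destruct (HF e He) as [d [Hd Hd']].
  apply (Ump _ _ (Uand _ _ (H1 d Hd) (H2 d Hd))). intros n [A B]. apply Hd'; auto.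
Qed.

Lemma rect_lim (xs ths : nat -> R) : (forall n, a <= xs n <= T /\ -1 <= ths n <= 1) ->
  exists x th, a <= x <= T /\ -1 <= th <= 1 /\ Ucv xs x /\ Ucv ths th.
Proof.
  intros H.
  destruct (ulim_ex U HU xs a T) as [x [Hx Hx']].
  { apply (U_all U HU); auto. intros n. apply H. }
  destruct (ulim_ex U HU ths (-1) 1) as [th [Ht Ht']].
  { apply (U_all U HU); auto. intros n. apply H. }
  exists x, th. repeat split; auto; lra.
Qed.

Lemma Fq_ct2 x th : ct2 (fun x th => fh x (Qt x th)) x th.
Proof. apply (ct2_comp2 fh (fun x _ => x) Qt). apply fh_ct2. apply ct2_fst. apply Qt_ct2. Qed.

Lemma C1_up : exists F0, forall x th, a <= x <= T -> -1 <= th <= 1 -> fh x (Qt x th) <= F0.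
Proof.
  apply NNPP. intros Hn.
  assert (Hb : forall n : nat, exists p : R * R, a <= fst p <= T /\ -1 <= snd p <= 1 /\ INR n < fh (fst p) (Qt (fst p) (snd p))).
  { intros n. apply NNPP. intros Hn2. apply Hn. exists (INR n). intros x th Hx Hth.
    destruct (Rle_dec (fh x (Qt x th)) (INR n)) as [|Hc]; auto. apply Rnot_le_lt in Hc. exfalso. apply Hn2. exists (x, th). cbn [fst snd]. repeat split; lra. }
  destruct (mychoice _ Hb) as [g Hg].
  destruct (rect_lim (fun n => fst (g n)) (fun n => snd (g n))) as [x [th [Hx [Hth [Cx Ct]]]]].
  { intros n. destruct (Hg n) as [A [B _]]. auto. }
  pose proof (Ucv_ct2 _ _ _ _ _ Cx Ct (Fq_ct2 x th)) as Hc.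
  destruct (exists_nat_gt (fh x (Qt x th) + 1)) as [N HN].
  destruct (U_ex U HU _ (Uand _ _ (Hc 1 ltac:(lra)) (Ucof N))) as [n [H1 H2]].
  destruct (Hg n) as [_ [_ H3]]. simpl in H1. apply le_INR in H2. rabs.
Qed.

Lemma C1_low : exists m0, 0 < m0 /\ forall x th, a <= x <= T -> -1 <= th <= 1 -> m0 <= fh x (Qt x th).
Proof.
  apply NNPP. intros Hn.
  assert (Hb : forall n : nat, exists p : R * R, a <= fst p <= T /\ -1 <= snd p <= 1 /\ fh (fst p) (Qt (fst p) (snd p)) < / INR (S n)).
  { intros n. apply NNPP. intros Hn2. apply Hn. exists (/ INR (S n)). split.
    apply Rinv_0_lt_compat, lt_0_INR; lia.
    intros x th Hx Hth.
    destruct (Rle_dec (/ INR (S n)) (fh x (Qt x th))) as [|Hc]; auto. apply Rnot_le_lt in Hc. exfalso. apply Hn2. exists (x, th). cbn [fst snd]. repeat split; lra. }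
  destruct (mychoice _ Hb) as [g Hg].
  destruct (rect_lim (fun n => fst (g n)) (fun n => snd (g n))) as [x [th [Hx [Hth [Cx Ct]]]]].
  { intros n. destruct (Hg n) as [A [B _]]. auto. }
  pose proof (Ucv_ct2 _ _ _ _ _ Cx Ct (Fq_ct2 x th)) as Hc.
  assert (Hpos : 0 < fh x (Qt x th)) by (unfold fh; apply Hfpos, cl_in).
  pose proof (U_small U HU 1 (fh x (Qt x th) / 2) ltac:(lra)) as Hs.
  destruct (U_ex U HU _ (Uand _ _ (Hc (fh x (Qt x th) / 2) ltac:(lra)) Hs)) as [n [H1 H2]].
  destruct (Hg n) as [_ [_ H3]]. simpl in H1. unfold Rdiv in H2. rewrite Rmult_1_l in H2.
  assert (0 < / INR (S n)) by (apply Rinv_0_lt_compat, lt_0_INR; lia). rabs.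
Qed.

Lemma C2 : forall e, 0 < e -> exists d, 0 < d /\ forall x z z', a <= x <= T ->
  Rabs (z - z') < d -> Rabs (Hf2 x z - Hf2 x z') < e.
Proof.
  intros e He. apply NNPP. intros Hn.
  assert (Hb : forall n : nat, exists p : R * R * R, a <= fst (fst p) <= T /\
     Rabs (snd (fst p) - snd p) < / INR (S n) /\ e <= Rabs (Hf2 (fst (fst p)) (snd (fst p)) - Hf2 (fst (fst p)) (snd p))).
  { intros n. apply NNPP. intros Hn2. apply Hn. exists (/ INR (S n)). split.
    apply Rinv_0_lt_compat, lt_0_INR; lia.
    intros x z z' Hx Hz.
    destruct (Rlt_dec (Rabs (Hf2 x z - Hf2 x z')) e) as [|Hc]; auto. exfalso. apply Hn2. exists (x, z, z'). cbn [fst snd]. repeat split; lra. }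
  destruct (mychoice _ Hb) as [g Hg].
  assert (Hth : forall n, exists th, -1 <= th <= 1 /\ Pj (fst (fst (g n))) (snd (fst (g n))) = Qt (fst (fst (g n))) th).
  { intros n. apply Pj_Qt. }
  destruct (mychoice _ Hth) as [ths Hths].
  destruct (rect_lim (fun n => fst (fst (g n))) ths) as [x [th [Hx [Hth' [Cx Ct]]]]].
  { intros n. split. apply Hg. apply Hths. }
  set (w := Qt x th).
  assert (Cw : Ucv (fun n => Pj (fst (fst (g n))) (snd (fst (g n)))) w).
  { intros e' He'. apply (Ump _ _ (Ucv_ct2 _ _ _ _ _ Cx Ct (Qt_ct2 x th) e' He')). intros n Hn'.
    rewrite (proj2 (Hths n)). auto. }
  assert (Cw' : Ucv (fun n => Pj (fst (fst (g n))) (snd (g n))) w).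
  { intros e' He'. pose proof (U_small U HU 1 (e' / 2) ltac:(lra)) as Hs.
    apply (Ump _ _ (Uand _ _ Hs (Cw (e'/2) ltac:(lra)))). intros n [H1 H2].
    unfold Rdiv in H1. rewrite Rmult_1_l in H1.
    pose proof (Pj_lip (fst (fst (g n))) (snd (fst (g n))) (snd (g n))).
    destruct (Hg n) as [_ [H3 _]].
    assert (0 < / INR (S n)) by (apply Rinv_0_lt_compat, lt_0_INR; lia). rabs. }
  pose proof (Ucv_ct2 _ _ _ _ _ Cx Cw (fh_ct2 x w)) as C1.
  pose proof (Ucv_ct2 _ _ _ _ _ Cx Cw' (fh_ct2 x w)) as C2.
  destruct (U_ex U HU _ (Uand _ _ (C1 (e/2) ltac:(lra)) (C2 (e/2) ltac:(lra)))) as [n [H1 H2]].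
  destruct (Hg n) as [_ [_ H3]]. unfold Hf2 in H3. rabs.
Qed.


Lemma Hf2_cl x z : Hf2 (cl x) z = Hf2 x z.
Proof.
  unfold Hf2, fh, Pj, vh, Mh. assert (cl (cl x) = cl x) by (apply cl_id, cl_in). now rewrite H.
Qed.

Lemma bounds_ex : exists m0 F0, 0 < m0 /\ forall x z, m0 <= Hf2 x z <= F0.
Proof.
  destruct C1_up as [F0 HF0]. destruct C1_low as [m0 [Hm0 Hm0']].
  exists m0, F0. split; auto. intros x z. rewrite <- Hf2_cl.
  destruct (Pj_Qt (cl x) z) as [th [Hth Heq]]. unfold Hf2. rewrite Heq.
  split; [apply Hm0'|apply HF0]; auto; apply cl_in.
Qed.

Variables m0 F0 : R.
Hypothesis Hm0 : 0 < m0.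
Hypothesis Hbnd : forall x z, m0 <= Hf2 x z <= F0.

Definition LL := T - a.
Definition clo := LL * m0.
Definition chi := LL * F0.
Definition cc c := Rmax clo (Rmin chi c).
Lemma m0F0 : m0 <= F0.
Proof. destruct (Hbnd 0 0); lra. Qed.
Lemma clo_pos : 0 < clo.
Proof. unfold clo, LL. apply Rmult_lt_0_compat; lra. Qed.
Lemma clo_chi : clo <= chi.
Proof. unfold clo, chi, LL. pose proof m0F0. apply Rmult_le_compat_l; lra. Qed.
Lemma cc_in c : clo <= cc c <= chi.
Proof. pose proof clo_chi. unfold cc; rmm. Qed.
Lemma cc_id c : clo <= c <= chi -> cc c = c.
Proof. pose proof clo_chi. unfold cc; rmm. Qed.

Definition Gs x z c := Kf x * (lambda * Hf2 x z / c ^ 2).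
Definition Bd := Rpower a (alpha - 1) * (lambda * F0 / clo ^ 2).

Lemma Gs_bnd x z c : clo <= c -> Rabs (Gs x z c) <= Bd.
Proof.
  intros Hc. pose proof clo_pos. pose proof (Kf_pos x). pose proof (Kf_le x). destruct (Hbnd x z).
  unfold Gs, Bd. rewrite Rabs_right.
  2:{ apply Rle_ge. apply Rmult_le_pos. lra. unfold Rdiv. apply Rmult_le_pos. nra. left. apply Rinv_0_lt_compat. nra. }
  apply Rmult_le_compat; try lra.
  unfold Rdiv. apply Rmult_le_pos. nra. left. apply Rinv_0_lt_compat. nra.
  unfold Rdiv. apply Rmult_le_compat. nra. left. apply Rinv_0_lt_compat. nra. nra.
  apply Rinv_le_contravar. nra. apply pow_incr. lra.
Qed.

Lemma Bd_nn : 0 <= Bd.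
Proof. eapply Rle_trans. apply Rabs_pos. apply (Gs_bnd 0 0 clo). lra. Qed.

Definition hn (n : nat) := LL / INR (S n).
Lemma hn_pos n : 0 < hn n.
Proof. unfold hn, LL. apply Rdiv_lt_0_compat. lra. apply lt_0_INR; lia. Qed.
Lemma nd_last n : nd a (hn n) (S n) = T.
Proof. unfold nd, hn, LL. field. apply not_0_INR. lia. Qed.

Definition sln c := fun x z => Gs x z (cc c).
Definition un n c := poly a ua (hn n) (sln c) (S n).
Definition Phi n c := RInt (fun x => Hf2 x (un n c x)) a T.

Lemma un_ct n c x : ct (un n c) x.
Proof. apply ct_poly. Qed.

Lemma comp_ct (g : R -> R) x : ct g x -> ct (fun y => Hf2 y (g y)) x.
Proof. intros H. apply (ct2_comp Hf2 (fun y => y) g). apply Hf2_ct2. apply ct_id. auto. Qed.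

Lemma comp_exRInt (g : R -> R) : (forall x, ct g x) -> ex_RInt (fun y => Hf2 y (g y)) a T.
Proof. intros H. apply (ex_RInt_continuous (V := R_CompleteNormedModule)). intros z _. apply ct_continuous, comp_ct, H. Qed.

Lemma RInt_diff (g1 g2 : R -> R) e : ex_RInt g1 a T -> ex_RInt g2 a T ->
  (forall x, a <= x <= T -> Rabs (g1 x - g2 x) <= e) -> Rabs (RInt g1 a T - RInt g2 a T) <= LL * e.
Proof.
  intros H1 H2 H.
  assert (E : RInt g1 a T - RInt g2 a T = RInt (fun x => g1 x - g2 x) a T).
  { symmetry. exact (RInt_minus g1 g2 a T H1 H2). }
  rewrite E. apply abs_RInt_le_const. lra. exact (ex_RInt_minus g1 g2 a T H1 H2). auto.
Qed.

Lemma RInt_bnds (g : R -> R) : (forall x, ct g x) ->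
  clo <= RInt (fun y => Hf2 y (g y)) a T <= chi.
Proof.
  intros Hg. pose proof (comp_exRInt g Hg) as Hex. split.
  - unfold clo, LL. replace ((T - a) * m0) with (RInt (fun _ => m0) a T).
    apply RInt_le. lra. apply ex_RInt_const. auto. intros x _. apply Hbnd.
    rewrite RInt_const. reflexivity.
  - unfold chi, LL. replace ((T - a) * F0) with (RInt (fun _ => F0) a T).
    apply RInt_le. lra. auto. apply ex_RInt_const. intros x _. apply Hbnd.
    rewrite RInt_const. reflexivity.
Qed.

Lemma Phi_in n c : clo <= Phi n c <= chi.
Proof. apply RInt_bnds. intros x. apply un_ct. Qed.

Lemma Gs_eq x z c : Gs x z c = (Kf x * lambda * Hf2 x z) * / (c ^ 2).
Proof. unfold Gs, Rdiv. ring. Qed.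

Lemma invsq_cc_ct c0 : ct (fun c => / (cc c ^ 2)) c0.
Proof.
  apply ct_cpt. apply continuity_pt_inv.
  - apply continuity_pt_mult. apply ct_cpt. unfold cc. apply ct_Rmax. apply ct_const. apply ct_Rmin. apply ct_const. apply ct_id.
    apply continuity_pt_mult. apply ct_cpt. unfold cc. apply ct_Rmax. apply ct_const. apply ct_Rmin. apply ct_const. apply ct_id.
    apply continuity_pt_const. intros ? ?; auto.
  - pose proof (cc_in c0). pose proof clo_pos. apply pow_nonzero. lra.
Qed.

Lemma Phi_ct n c0 : ct (Phi n) c0.
Proof.
  intros e He.
  destruct (C2 (e / (2 * LL))) as [d [Hd Hd']].
  { apply Rdiv_lt_0_compat. lra. unfold LL. lra. }
  assert (Hpar : forall x z e', 0 < e' -> exists d', 0 < d' /\ forall c z', Rabs (c - c0) < d' ->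
      Rabs (z' - z) < d' -> Rabs (sln c x z' - sln c0 x z) < e').
  { intros x z e' He'. unfold sln.
    destruct (ct2_mul_ct (fun _ z => Kf x * lambda * Hf2 x z) (fun c => / (cc c ^ 2)) x z c0) with (e := e')
      as [d' [Hd1 Hd2]]; auto.
    - apply (ct2_mult (fun _ _ => Kf x * lambda) (fun _ z => Hf2 x z)). intros e'' He''. exists 1. split. lra.
      intros. rewrite Rminus_diag, Rabs_R0. auto.
      intros e'' He''. destruct (Hf2_ct2 x z e'' He'') as [d'' [Hd'' Hd''']]. exists d''. split; auto.
      intros x' z' _ Hz'. apply Hd'''; auto. rewrite Rminus_diag, Rabs_R0; auto.
    - apply invsq_cc_ct.
    - exists d'. split; auto. intros c z' Hc Hz. rewrite !Gs_eq. apply (Hd2 x z' c); auto. rewrite Rminus_diag, Rabs_R0; auto. }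
  destruct (poly_cont_param a ua (hn n) sln c0 (hn_pos n) Hpar (S n) d Hd) as [d1 [Hd1 Hd1']].
  exists d1. split; auto. intros c Hc. unfold Phi.
  eapply Rle_lt_trans. apply RInt_diff. apply comp_exRInt; intros; apply un_ct. apply comp_exRInt; intros; apply un_ct.
  intros x Hx. left. apply Hd'. auto. apply Hd1'. auto.
  replace (LL * (e / (2 * LL))) with (e / 2) by (unfold LL; field; lra). lra.
Qed.

Lemma fixc n : {c | clo <= c <= chi /\ Phi n c = c}.
Proof.
  pose proof clo_chi.
  destruct (IVT_gen (fun c => Phi n c - c) clo chi 0) as [c [Hc Hc']].
  - intros c. apply continuity_pt_minus. apply ct_cpt, Phi_ct. apply continuity_pt_id.
  - pose proof (Phi_in n clo). pose proof (Phi_in n chi). rmm.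
  - exists c. rewrite Rmin_left, Rmax_right in Hc by lra. split; auto. lra.
Qed.


Definition cs n := proj1_sig (fixc n).
Lemma cs_in n : clo <= cs n <= chi.
Proof. apply (proj2_sig (fixc n)). Qed.
Lemma cs_fix n : Phi n (cs n) = cs n.
Proof. apply (proj2_sig (fixc n)). Qed.
Definition us n := un n (cs n).

Lemma us_a n : us n a = ua.
Proof. unfold us, un. apply poly_a. apply hn_pos. Qed.

Lemma sl_bnd c x z : Rabs (sln c x z) <= Bd.
Proof. unfold sln. apply Gs_bnd. apply cc_in. Qed.

Lemma Wf_T n x : a <= x <= T -> Wf a (hn n) (S n) x = x - a.
Proof. intros H. apply Wf_full. pose proof (nd_last n). unfold nd in H0. lra. Qed.

Lemma us_lip n x y : a <= x <= T -> a <= y <= T -> Rabs (us n y - us n x) <= Bd * Rabs (y - x).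
Proof.
  intros Hx Hy. unfold us, un.
  destruct (Rle_dec x y) as [Hxy|Hxy].
  - pose proof (poly_lip a ua (hn n) (sln (cs n)) (hn_pos n) (S n) Bd (sl_bnd _) x y Hxy) as H.
    rewrite !Wf_T in H by auto. rewrite (Rabs_right (y - x)) by lra. lra.
  - pose proof (poly_lip a ua (hn n) (sln (cs n)) (hn_pos n) (S n) Bd (sl_bnd _) y x ltac:(lra)) as H.
    rewrite !Wf_T in H by auto. rewrite Rabs_minus_sym, (Rabs_minus_sym y x), (Rabs_right (x - y)) by lra. lra.
Qed.

Lemma us_bnd n x : a <= x <= T -> ua - Bd * LL <= us n x <= ua + Bd * LL.
Proof.
  intros Hx. pose proof (us_lip n a x ltac:(lra) Hx). rewrite us_a in H.
  pose proof Bd_nn. assert (Rabs (x - a) <= LL) by (unfold LL; rabs).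
  assert (Bd * Rabs (x - a) <= Bd * LL) by (apply Rmult_le_compat_l; auto). rabs.
Qed.

Lemma u_ex : exists u : R -> R, forall x, a <= x <= T -> Ucv (fun n => us n x) (u x).
Proof.
  apply (mychoice (fun x l => a <= x <= T -> Ucv (fun n => us n x) l)). intros x.
  destruct (Rle_dec a x) as [H1|H1]; [destruct (Rle_dec x T) as [H2|H2]|].
  - destruct (ulim_ex U HU (fun n => us n x) (ua - Bd * LL) (ua + Bd * LL)) as [l [_ Hl]].
    { apply (U_all U HU). intros n. apply us_bnd; auto. }
    exists l. intros _. exact Hl.
  - exists 0. intros; lra.
  - exists 0. intros; lra.
Qed.

Lemma c_ex : exists c, clo <= c <= chi /\ Ucv cs c.
Proof.
  destruct (ulim_ex U HU cs clo chi) as [l [Hl Hl']].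
  { apply (U_all U HU). apply cs_in. }
  exists l. auto.
Qed.

Lemma Ucv_unique xs l1 l2 : Ucv xs l1 -> Ucv xs l2 -> l1 = l2.
Proof.
  intros H1 H2. apply NNPP. intros Hn.
  assert (0 < Rabs (l1 - l2) / 2) by (assert (l1 - l2 <> 0) by lra; pose proof (Rabs_pos_lt _ H); lra).
  destruct (U_ex U HU _ (Uand _ _ (H1 _ H) (H2 _ H))) as [n [A B]]. rabs.
Qed.

Lemma le_eps X Y : (forall eta, 0 < eta -> X <= Y + eta) -> X <= Y.
Proof.
  intros H. destruct (Rle_dec X Y) as [|Hn]; auto. specialize (H ((X - Y) / 2) ltac:(lra)). lra.
Qed.

Section Lim.
Variable u : R -> R.
Hypothesis Hu : forall x, a <= x <= T -> Ucv (fun n => us n x) (u x).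
Variable c : R.
Hypothesis Hc : clo <= c <= chi.
Hypothesis Hcv : Ucv cs c.

Definition ub x := u (cl x).

Lemma ub_a : ub a = ua.
Proof.
  unfold ub. rewrite cl_id by lra.
  apply (Ucv_const_eq U HU (fun n => us n a)). apply Hu; lra. apply us_a.
Qed.

Lemma Ucv_diff xs ys x y : Ucv xs x -> Ucv ys y -> Ucv (fun n => Rabs (xs n - ys n)) (Rabs (x - y)).
Proof.
  intros H1 H2. apply (Ucv_ct2 (fun p q => Rabs (p - q))); auto.
  intros e He. exists (e / 2). split. lra. intros. rabs.
Qed.

Lemma ub_lip x y : Rabs (ub y - ub x) <= Bd * Rabs (y - x).
Proof.
  unfold ub. pose proof (cl_in x). pose proof (cl_in y).
  assert (Rabs (u (cl y) - u (cl x)) <= Bd * Rabs (cl y - cl x)).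
  { apply (Ucv_le U HU _ _ _ (Ucv_diff _ _ _ _ (Hu (cl y) H0) (Hu (cl x) H))).
    apply (U_all U HU). intros n. apply us_lip; auto. }
  pose proof (cl_lip y x). pose proof Bd_nn.
  assert (Bd * Rabs (cl y - cl x) <= Bd * Rabs (y - x)) by (apply Rmult_le_compat_l; auto). lra.
Qed.

Lemma ub_ct x : ct ub x.
Proof.
  intros e He. exists (e / (Bd + 1)). split. apply Rdiv_lt_0_compat; [lra|pose proof Bd_nn; lra].
  intros y Hy. pose proof (ub_lip x y). pose proof Bd_nn. pose proof (Rabs_pos (y - x)).
  assert ((Bd + 1) * Rabs (y - x) < e).
  { apply (Rmult_lt_compat_l (Bd + 1)) in Hy; [|lra]. replace ((Bd + 1) * (e / (Bd + 1))) with e in Hy by (field; lra). lra. }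
  nra.
Qed.

Lemma u_unif e : 0 < e -> U (fun n => forall x, a <= x <= T -> Rabs (us n x - ub x) < e).
Proof.
  intros He. destruct (Uul U HU (fun n => forall x, a <= x <= T -> Rabs (us n x - ub x) < e)) as [H|H]; auto.
  exfalso.
  assert (Hb : forall n, exists x, (~ (forall x, a <= x <= T -> Rabs (us n x - ub x) < e)) ->
      a <= x <= T /\ e <= Rabs (us n x - ub x)).
  { intros n. destruct (classic (forall x, a <= x <= T -> Rabs (us n x - ub x) < e)) as [H1|H1].
    - exists a. intros H2. contradiction.
    - apply not_all_ex_not in H1. destruct H1 as [x Hx]. exists x. intros _.
      apply imply_to_and in Hx. destruct Hx. split; auto. lra. }
  destruct (mychoice _ Hb) as [g Hg].
  destruct (ulim_ex U HU (fun n => g n) a T) as [xs [Hxs Hxs']].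
  { apply (Ump _ _ H). intros n Hn. apply (Hg n Hn). }
  set (dl := e / (4 * (Bd + 1))).
  assert (Hdl : 0 < dl) by (unfold dl; apply Rdiv_lt_0_compat; [lra|pose proof Bd_nn; lra]).
  assert (Hxu : Ucv (fun n => us n xs) (ub xs)).
  { unfold ub. rewrite cl_id by auto. apply Hu; auto. }
  destruct (U_ex U HU _ (Uand _ _ H (Uand _ _ (Hxs' dl Hdl) (Hxu (e / 4) ltac:(lra))))) as [n [H1 [H2 H3]]].
  destruct (Hg n H1) as [Hgn Hge].
  pose proof (us_lip n xs (g n) Hxs Hgn). pose proof (ub_lip xs (g n)).
  pose proof Bd_nn. cbv beta in H2.
  assert (Bd * Rabs (g n - xs) <= Bd * dl) by (apply Rmult_le_compat_l; lra).
  assert (Bd * dl < e / 4).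
  { unfold dl. apply (Rmult_lt_reg_r (4 * (Bd + 1))). lra.
    replace (Bd * (e / (4 * (Bd + 1))) * (4 * (Bd + 1))) with (Bd * e) by (field; lra).
    replace (e / 4 * (4 * (Bd + 1))) with (Bd * e + e) by (field; lra). lra. }
  rabs.
Qed.

Definition Iub := RInt (fun x => Hf2 x (ub x)) a T.

Lemma c_eq : c = Iub.
Proof.
  apply (Ucv_unique cs); auto.
  intros e He.
  destruct (C2 (e / (2 * LL))) as [d [Hd Hd']].
  { apply Rdiv_lt_0_compat. lra. unfold LL. lra. }
  apply (Ump _ _ (u_unif d Hd)). intros n Hn.
  rewrite <- cs_fix. unfold Phi. fold (us n).
  eapply Rle_lt_trans. apply RInt_diff. apply comp_exRInt; intros; apply un_ct. apply comp_exRInt; intros; apply ub_ct.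
  intros x Hx. left. apply Hd'; auto.
  replace (LL * (e / (2 * LL))) with (e / 2) by (unfold LL; field; lra). lra.
Qed.

Lemma ub_wder t : a <= t <= T -> wder ub t (Gs t (ub t) c).
Proof.
  intros Ht e He.
  assert (Hcpos : 0 < c) by (pose proof clo_pos; lra).
  destruct (ct2_mul_ct (fun x z => Kf x * lambda * Hf2 x z) (fun c => / (c ^ 2)) t (ub t) c) with (e := e)
    as [rho [Hrho Hrho']]; auto.
  { apply (ct2_mult (fun x _ => Kf x * lambda) Hf2). apply ct2_of_ct1. apply ct_mult. apply Kf_ct. apply ct_const.
    apply Hf2_ct2. }
  { apply ct_cpt. apply continuity_pt_inv. apply continuity_pt_mult. apply continuity_pt_id.
    apply continuity_pt_mult. apply continuity_pt_id. apply continuity_pt_const. intros ? ?; auto.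
    apply pow_nonzero. lra. }
  pose proof Bd_nn as HBd.
  set (dl := rho / (4 * (Bd + 1))).
  assert (Hdl : 0 < dl) by (unfold dl; apply Rdiv_lt_0_compat; lra).
  assert (Hdl2 : dl <= rho / 4).
  { unfold dl. unfold Rdiv. apply Rmult_le_compat_l. lra. apply Rinv_le_contravar; lra. }
  assert (HBdl : Bd * (2 * dl) < rho / 2).
  { unfold dl. apply (Rmult_lt_reg_r (4 * (Bd + 1))). lra.
    replace (Bd * (2 * (rho / (4 * (Bd + 1)))) * (4 * (Bd + 1))) with (2 * Bd * rho) by (field; lra).
    replace (rho / 2 * (4 * (Bd + 1))) with (2 * Bd * rho + 2 * rho) by (field; lra). lra. }
  exists dl. split; auto.
  intros t' Ht' Htt'.
  set (D := Gs t (ub t) c).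
  apply le_eps. intros eta Heta.
  assert (HU3 := Uand _ _ (U_small U HU LL dl Hdl) (Uand _ _ (Hcv rho Hrho) (u_unif (Rmin (eta / 2) (rho / 2)) ltac:(apply Rmin_pos; lra)))).
  destruct (U_ex U HU _ HU3) as [n [Hh [Hcn Hun]]].
  fold (hn n) in Hh. rewrite Rabs_right in Hh by (left; apply hn_pos).
  pose proof (hn_pos n) as Hhpos.
  set (x0 := Rmin t t'). set (y0 := Rmax t t').
  assert (Hxy : x0 <= y0) by (unfold x0, y0; rmm).
  pose proof (slope_lemma a ua (hn n) (sln (cs n)) (hn_pos n) (S n) x0 y0 D e Hxy) as SL.
  assert (Hx0 : a <= x0 <= T) by (unfold x0; rmm). assert (Hy0 : a <= y0 <= T) by (unfold y0; rmm).
  rewrite !Wf_T in SL by auto. replace (y0 - a - (x0 - a)) with (y0 - x0) in SL by ring.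
  assert (SL' : Rabs (us n y0 - us n x0 - D * (y0 - x0)) <= e * (y0 - x0)).
  { apply SL. intros i Hi Hact. destruct (active a (hn n) (hn_pos n) x0 y0 i Hact) as [A1 A2].
    assert (Hnd : a <= nd a (hn n) i <= T).
    { split. unfold nd. pose proof (INR_hh_nonneg (hn n) Hhpos i). lra. lra. }
    rewrite <- (poly_node' a ua (hn n) (sln (cs n)) (hn_pos n) i (S n)) by lia.
    fold (un n (cs n)). fold (us n).
    unfold sln. rewrite (cc_id (cs n)) by apply cs_in.
    assert (Hti : Rabs (nd a (hn n) i - t) < 2 * dl).
    { unfold x0, y0 in *. rmm; rabs. }
    assert (Hui : Rabs (us n (nd a (hn n) i) - ub t) < rho).
    { pose proof (us_lip n t (nd a (hn n) i) Ht Hnd).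
      assert (Bd * Rabs (nd a (hn n) i - t) <= Bd * (2 * dl)) by (apply Rmult_le_compat_l; lra).
      specialize (Hun t Ht). assert (Rmin (eta / 2) (rho / 2) <= rho / 2) by apply Rmin_r. rabs. }
    left. rewrite Gs_eq. unfold D. rewrite Gs_eq. apply (Hrho' (nd a (hn n) i) (us n (nd a (hn n) i)) (cs n)); auto. lra. }
  assert (SL2 : Rabs (us n t' - us n t - D * (t' - t)) <= e * Rabs (t' - t)).
  { unfold x0, y0 in SL'. destruct (Rle_dec t t') as [Hle|Hle].
    - rewrite Rmin_left, Rmax_right in SL' by lra. rewrite (Rabs_right (t' - t)) by lra. auto.
    - rewrite Rmin_right, Rmax_left in SL' by lra. rewrite (Rabs_left (t' - t)) by lra.
      replace (us n t' - us n t - D * (t' - t)) with (- (us n t - us n t' - D * (t - t'))) by ring.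
      rewrite Rabs_Ropp. lra. }
  pose proof (Hun t Ht). pose proof (Hun t' Ht'). assert (Rmin (eta / 2) (rho / 2) <= eta / 2) by apply Rmin_l.
  rabs.
Qed.


Lemma bnd_right p q : a <= p < q -> q <= T -> M p = 0 -> M q > 0 ->
  exists ts, p <= ts < q /\ M ts = 0 /\ forall s, ts < s <= q -> M s > 0.
Proof.
  intros Hpq HqT Hp Hq.
  set (E := fun s => p <= s <= q /\ M s = 0).
  assert (HB : bound E) by (exists q; intros s [Hs _]; lra).
  destruct (completeness E HB (ex_intro _ p (conj (conj (Rle_refl p) (Rlt_le _ _ (proj2 Hpq))) Hp))) as [ts [Hub Hlub]].
  assert (Hts1 : p <= ts) by (apply Hub; split; [lra|auto]).
  assert (Hts2 : ts <= q) by (apply Hlub; intros s [Hs _]; lra).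
  assert (HM0ts : M ts = 0).
  { destruct (HM0 ts ltac:(lra)) as [Hpos|]; auto. exfalso.
    destruct (M_ctw ts ltac:(lra) (M ts) Hpos) as [d [Hd Hd']].
    assert (Hex : exists s, E s /\ ts - d < s).
    { apply NNPP. intros Hn. assert (ts <= ts - d); [|lra]. apply Hlub. intros s Es.
      destruct (Rle_dec s (ts - d)) as [|Hcc]; auto. exfalso. apply Hn. exists s. split; auto. lra. }
    destruct Hex as [s [[Hs1 Hs2] Hs3]]. assert (s <= ts) by (apply Hub; split; auto).
    specialize (Hd' s ltac:(lra) ltac:(rabs)). rewrite Hs2 in Hd'. rabs. }
  exists ts. split; [split|split]; auto.
  - destruct (Req_dec ts q) as [->|]; [lra|lra].
  - intros s Hs. destruct (HM0 s ltac:(lra)) as [|H0]; auto. exfalso.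
    assert (s <= ts) by (apply Hub; split; [lra|auto]). lra.
Qed.

Lemma bnd_left p q : a <= q -> q < p <= T -> M p = 0 -> M q > 0 ->
  exists ts, q < ts <= p /\ M ts = 0 /\ forall s, q <= s < ts -> M s > 0.
Proof.
  intros Hqa Hqp Hp Hq.
  set (E := fun s => q <= s <= p /\ forall r, q <= r <= s -> M r > 0).
  assert (HB : bound E) by (exists p; intros s [Hs _]; lra).
  assert (Eq : E q) by (split; [lra|intros r Hr; replace r with q by lra; auto]).
  destruct (completeness E HB (ex_intro _ q Eq)) as [ts [Hub Hlub]].
  assert (Hts1 : q <= ts) by (apply Hub; auto).
  assert (Hts2 : ts <= p) by (apply Hlub; intros s [Hs _]; lra).
  assert (Hbelow : forall r, q <= r < ts -> M r > 0).
  { intros r Hr. assert (Hex : exists s, E s /\ r < s).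
    { apply NNPP. intros Hn. assert (ts <= r); [|lra]. apply Hlub. intros s Es.
      destruct (Rle_dec s r) as [|Hcc]; auto. exfalso. apply Hn. exists s. split; auto. lra. }
    destruct Hex as [s [[Hs1 Hs2] Hs3]]. apply Hs2. lra. }
  assert (HM0ts : M ts = 0).
  { destruct (HM0 ts ltac:(lra)) as [Hpos|]; auto. exfalso.
    destruct (M_ctw ts ltac:(lra) (M ts) Hpos) as [d [Hd Hd']].
    assert (Htsp : ts < p) by (destruct (Req_dec ts p); [subst; lra|lra]).
    set (s' := Rmin (ts + d / 2) p).
    assert (Es' : E s').
    { split. unfold s'; rmm. intros r Hr. destruct (Rlt_dec r ts) as [Hr'|Hr']. apply Hbelow; lra.
      assert (Hrr : Rabs (r - ts) < d) by (unfold s' in Hr; rmm; rabs).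
      specialize (Hd' r ltac:(unfold s' in Hr; rmm) Hrr). rabs. }
    assert (s' <= ts) by (apply Hub; auto). unfold s' in H. rmm. }
  exists ts. split; [split|split]; auto.
  destruct (Req_dec ts q) as [Heq|]; [rewrite Heq in HM0ts; lra|lra].
Qed.

Lemma bnd_pt xi t1 : a <= xi <= T -> a <= t1 <= T -> M xi = 0 -> M t1 > 0 ->
  exists ts, a <= ts <= T /\ M ts = 0 /\ forall d, 0 < d -> exists s, a < s < T /\ Rabs (s - ts) < d /\ M s > 0.
Proof.
  intros Hxi Ht1 Hx H1.
  destruct (Rlt_dec xi t1) as [Hlt|Hge].
  - destruct (bnd_right xi t1 ltac:(lra) ltac:(lra) Hx H1) as [ts [Hts [H0 Hpos]]].
    exists ts. split. lra. split; auto. intros d Hd.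
    exists (ts + Rmin d (t1 - ts) / 2). assert (0 < Rmin d (t1 - ts)) by (apply Rmin_pos; lra).
    assert (Rmin d (t1 - ts) <= d) by apply Rmin_l. assert (Rmin d (t1 - ts) <= t1 - ts) by apply Rmin_r.
    split. lra. split. rabs. apply Hpos. lra.
  - assert (t1 < xi) by (destruct (Req_dec xi t1); [subst; lra|lra]).
    destruct (bnd_left xi t1 ltac:(lra) ltac:(lra) Hx H1) as [ts [Hts [H0 Hpos]]].
    exists ts. split. lra. split; auto. intros d Hd.
    exists (ts - Rmin d (ts - t1) / 2). assert (0 < Rmin d (ts - t1)) by (apply Rmin_pos; lra).
    assert (Rmin d (ts - t1) <= d) by apply Rmin_l. assert (Rmin d (ts - t1) <= ts - t1) by apply Rmin_r.
    split. lra. split. rabs. apply Hpos. lra.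
Qed.

Lemma modify_pt (g g' : R -> R) s : a < s < T -> ex_RInt g a T -> (forall x, x <> s -> g' x = g x) ->
  ex_RInt g' a T /\ RInt g' a T = RInt g a T.
Proof.
  intros Hs Hg Heq.
  assert (H1 : ex_RInt g a s) by (apply (ex_RInt_Chasles_1 g a s T); [lra|auto]).
  assert (H2 : ex_RInt g s T) by (apply (ex_RInt_Chasles_2 g a s T); [lra|auto]).
  assert (E1 : forall x, Rmin a s < x < Rmax a s -> g x = g' x).
  { intros x Hx. rewrite Rmin_left, Rmax_right in Hx by lra. symmetry. apply Heq. lra. }
  assert (E2 : forall x, Rmin s T < x < Rmax s T -> g x = g' x).
  { intros x Hx. rewrite Rmin_left, Rmax_right in Hx by lra. symmetry. apply Heq. lra. }
  assert (H1' : ex_RInt g' a s) by (apply (ex_RInt_ext g g' a s E1 H1)).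
  assert (H2' : ex_RInt g' s T) by (apply (ex_RInt_ext g g' s T E2 H2)).
  split. apply (ex_RInt_Chasles g' a s T H1' H2').
  rewrite <- (RInt_Chasles g' a s T H1' H2'). rewrite <- (RInt_Chasles g a s T H1 H2).
  rewrite (RInt_ext g g' a s E1), (RInt_ext g g' s T E2). reflexivity.
Qed.

Lemma ctw_ext (g1 g2 : R -> R) x : (forall s, a <= s <= T -> g1 s = g2 s) -> a <= x <= T -> ct g2 x -> ctw g1 x.
Proof.
  intros He Hx Hcg e Hep. destruct (Hcg e Hep) as [d [Hd Hd']]. exists d. split; auto.
  intros y Hy Hyx. rewrite !He by auto. apply Hd'; auto.
Qed.

Lemma mixed xi t1 (y1 y2 : R -> R) : a <= xi <= T -> a <= t1 <= T -> M xi = 0 -> M t1 > 0 ->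
  ex_RInt (fun x => f x (y1 x)) a T -> ex_RInt (fun x => f x (y2 x)) a T ->
  0 < RInt (fun x => f x (y1 x)) a T -> RInt (fun x => f x (y1 x)) a T < RInt (fun x => f x (y2 x)) a T -> False.
Proof.
  intros Hxi Ht1 Hx H1 Ex1 Ex2 HI1 HI12.
  set (I1 := RInt (fun x => f x (y1 x)) a T) in *. set (I2 := RInt (fun x => f x (y2 x)) a T) in *.
  destruct (bnd_pt xi t1 Hxi Ht1 Hx H1) as [ts [Hts [Hts0 Hnear]]].
  set (phi := fun s => lambda * f s (v s + M s) / I1 ^ 2 - lambda * f s (v s - M s) / I2 ^ 2 - 2 * dM s).
  assert (HdM0 : dM ts = 0) by (apply (proj1 (proj2 Htube)); auto).
  assert (Hphi_ts : 0 < phi ts).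
  { unfold phi. rewrite Hts0, HdM0, Rplus_0_r, Rminus_0_r.
    pose proof (Hfpos ts (v ts) Hts).
    assert (/ I2 ^ 2 < / I1 ^ 2).
    { apply Rinv_lt_contravar. apply Rmult_lt_0_compat; apply pow_lt; lra. simpl. rewrite !Rmult_1_r. nra. }
    unfold Rdiv. assert (0 < lambda * f ts (v ts)) by (apply Rmult_lt_0_compat; auto).
    nra. }
  assert (Hct : ctw phi ts).
  { intros e He.
    assert (Cp : ctw (fun s => f s (v s + M s)) ts).
    { apply (ctw_ext _ (fun s => fh s (vh s + Mh s))); auto.
      - intros s Hs. unfold fh, vh, Mh. rewrite cl_id; auto.
      - apply (ct2_comp fh (fun s => s) (fun s => vh s + Mh s)). apply fh_ct2. apply ct_id. apply ct_plus. apply vh_ct. apply Mh_ct. }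
    assert (Cm : ctw (fun s => f s (v s - M s)) ts).
    { apply (ctw_ext _ (fun s => fh s (vh s - Mh s))); auto.
      - intros s Hs. unfold fh, vh, Mh. rewrite cl_id; auto.
      - apply (ct2_comp fh (fun s => s) (fun s => vh s - Mh s)). apply fh_ct2. apply ct_id. apply ct_minus. apply vh_ct. apply Mh_ct. }
    assert (CdM : ctw dM ts) by (apply ctab_ctw; auto; apply (proj2 HM)).
    set (k1 := lambda / I1 ^ 2). set (k2 := lambda / I2 ^ 2).
    assert (Hk1 : 0 < k1) by (unfold k1; apply Rdiv_lt_0_compat; [lra|apply pow_lt; lra]).
    assert (Hk2 : 0 < k2) by (unfold k2; apply Rdiv_lt_0_compat; [lra|apply pow_lt; lra]).
    destruct (Cp (e / (3 * k1)) ltac:(apply Rdiv_lt_0_compat; lra)) as [d1 [Hd1 Hd1']].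
    destruct (Cm (e / (3 * k2)) ltac:(apply Rdiv_lt_0_compat; lra)) as [d2 [Hd2 Hd2']].
    destruct (CdM (e / 6) ltac:(lra)) as [d3 [Hd3 Hd3']].
    exists (Rmin d1 (Rmin d2 d3)). split. repeat apply Rmin_pos; auto.
    intros y Hy Hyd.
    specialize (Hd1' y Hy ltac:(rmm)). specialize (Hd2' y Hy ltac:(rmm)). specialize (Hd3' y Hy ltac:(rmm)).
    unfold phi.
    replace (lambda * f y (v y + M y) / I1 ^ 2) with (k1 * f y (v y + M y)) by (unfold k1; field; first [apply pow_nonzero; lra | intro; lra]).
    replace (lambda * f y (v y - M y) / I2 ^ 2) with (k2 * f y (v y - M y)) by (unfold k2; field; first [apply pow_nonzero; lra | intro; lra]).
    replace (lambda * f ts (v ts + M ts) / I1 ^ 2) with (k1 * f ts (v ts + M ts)) by (unfold k1; field; first [apply pow_nonzero; lra | intro; lra]).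
    replace (lambda * f ts (v ts - M ts) / I2 ^ 2) with (k2 * f ts (v ts - M ts)) by (unfold k2; field; first [apply pow_nonzero; lra | intro; lra]).
    assert (A1 : Rabs (k1 * f y (v y + M y) - k1 * f ts (v ts + M ts)) < e / 3).
    { rewrite <- Rmult_minus_distr_l, Rabs_mult, Rabs_right by lra.
      apply (Rmult_lt_compat_l k1) in Hd1'; auto. replace (k1 * (e / (3 * k1))) with (e / 3) in Hd1' by (field; lra). lra. }
    assert (A2 : Rabs (k2 * f y (v y - M y) - k2 * f ts (v ts - M ts)) < e / 3).
    { rewrite <- Rmult_minus_distr_l, Rabs_mult, Rabs_right by lra.
      apply (Rmult_lt_compat_l k2) in Hd2'; auto. replace (k2 * (e / (3 * k2))) with (e / 3) in Hd2' by (field; lra). lra. }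
    rabs. }
  destruct (Hct (phi ts) Hphi_ts) as [d [Hd Hd']].
  destruct (Hnear d Hd) as [s [Hs [Hsd HMs]]].
  specialize (Hd' s ltac:(lra) Hsd).
  assert (Hphis : 0 < phi s) by rabs.
  set (y1' := fun x => if Req_EM_T x s then v s + M s else y1 x).
  set (y2' := fun x => if Req_EM_T x s then v s - M s else y2 x).
  destruct (modify_pt (fun x => f x (y1 x)) (fun x => f x (y1' x)) s Hs Ex1) as [Ex1' EI1].
  { intros x Hxs. unfold y1'. destruct (Req_EM_T x s); [contradiction|auto]. }
  destruct (modify_pt (fun x => f x (y2 x)) (fun x => f x (y2' x)) s Hs Ex2) as [Ex2' EI2].
  { intros x Hxs. unfold y2'. destruct (Req_EM_T x s); [contradiction|auto]. }
  assert (Hy1s : y1' s = v s + M s) by (unfold y1'; destruct (Req_EM_T s s); [auto|contradiction]).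
  assert (Hy2s : y2' s = v s - M s) by (unfold y2'; destruct (Req_EM_T s s); [auto|contradiction]).
  pose proof (proj1 Htube s y1' ltac:(lra) Ex1') as T1.
  pose proof (proj1 Htube s y2' ltac:(lra) Ex2') as T2.
  unfold thermistor_g in T1, T2. rewrite EI1 in T1. rewrite EI2 in T2. fold I1 in T1. fold I2 in T2.
  rewrite Hy1s in T1. rewrite Hy2s in T2.
  assert (Ha1 : Rabs (v s + M s - v s) = M s) by (rewrite Rabs_right; lra).
  assert (Ha2 : Rabs (v s - M s - v s) = M s) by (rewrite Rabs_left; lra).
  specialize (T1 Ha1). specialize (T2 Ha2).
  replace (v s + M s - v s) with (M s) in T1 by ring.
  replace (v s - M s - v s) with (- M s) in T2 by ring.
  assert (M s * phi s <= 0).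
  { unfold phi. nra. }
  nra.
Qed.

Definition ut x := Pj x (ub x).

Lemma fh_eq x z : a <= x <= T -> fh x z = f x z.
Proof. intros Hx. unfold fh. rewrite cl_id; auto. Qed.
Lemma vh_eq x : a <= x <= T -> vh x = v x.
Proof. intros Hx. unfold vh. rewrite cl_id; auto. Qed.
Lemma Mh_eq x : a <= x <= T -> Mh x = M x.
Proof. intros Hx. unfold Mh. rewrite cl_id; auto. Qed.

Lemma fut_eq x : a <= x <= T -> Hf2 x (ub x) = f x (ut x).
Proof. intros Hx. unfold Hf2, ut. apply fh_eq; auto. Qed.

Lemma ext_open (g1 g2 : R -> R) : (forall x, a <= x <= T -> g1 x = g2 x) ->
  forall x, Rmin a T < x < Rmax a T -> g1 x = g2 x.
Proof. intros H x Hx. rewrite Rmin_left, Rmax_right in Hx by lra. apply H; lra. Qed.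

Lemma ut_ex : ex_RInt (fun x => f x (ut x)) a T.
Proof.
  apply (ex_RInt_ext (fun x => Hf2 x (ub x))). apply ext_open. apply fut_eq.
  apply comp_exRInt. apply ub_ct.
Qed.

Lemma Iut : RInt (fun x => f x (ut x)) a T = Iub.
Proof. unfold Iub. symmetry. apply RInt_ext. apply ext_open. apply fut_eq. Qed.

Lemma Gs_th t : a <= t <= T -> Gs t (ub t) c = Kf t * thermistor_g lambda a T f ut t.
Proof. intros Ht. unfold Gs, thermistor_g. rewrite c_eq, <- Iut, fut_eq; auto. Qed.

Lemma Iub_ge : clo <= Iub.
Proof. apply RInt_bnds. apply ub_ct. Qed.

Lemma fv_eq x : a <= x <= T -> Hf2 x (vh x) = f x (v x).
Proof.
  intros Hx. unfold Hf2. rewrite Pj_id. rewrite fh_eq, vh_eq; auto.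
  rewrite Rminus_diag, Rabs_R0. apply Mh_nn.
Qed.

Lemma v_ex : ex_RInt (fun x => f x (v x)) a T.
Proof.
  apply (ex_RInt_ext (fun x => Hf2 x (vh x))). apply ext_open. apply fv_eq.
  apply comp_exRInt. apply vh_ct.
Qed.

Lemma Iv_ge : clo <= RInt (fun x => f x (v x)) a T.
Proof.
  replace (RInt (fun x => f x (v x)) a T) with (RInt (fun x => Hf2 x (vh x)) a T).
  apply RInt_bnds. apply vh_ct. apply RInt_ext. apply ext_open. apply fv_eq.
Qed.

Lemma claimZ xi : a <= xi <= T -> M xi = 0 -> thermistor_g lambda a T f ut xi = dv xi.
Proof.
  intros Hxi HMxi.
  destruct (proj1 (proj2 Htube) xi Hxi HMxi) as [Hdv _]. rewrite Hdv.
  assert (Hut : forall x, a <= x <= T -> M x = 0 -> ut x = v x).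
  { intros x Hx HMx. unfold ut. pose proof (Pj_in x (ub x)). rewrite Mh_eq, HMx in H by auto.
    rewrite <- vh_eq by auto. rabs. }
  unfold thermistor_g. rewrite (Hut xi Hxi HMxi).
  assert (HI : RInt (fun x => f x (ut x)) a T = RInt (fun x => f x (v x)) a T).
  { destruct (classic (forall t, a <= t <= T -> M t = 0)) as [Hall|Hn].
    - apply RInt_ext. apply ext_open. intros x Hx. rewrite Hut; auto.
    - apply not_all_ex_not in Hn. destruct Hn as [t1 Ht1]. apply imply_to_and in Ht1. destruct Ht1 as [Ht1 HMt1].
      assert (HMp : M t1 > 0) by (destruct (HM0 t1 Ht1); [lra|exfalso; apply HMt1; auto]).
      pose proof clo_pos. pose proof Iub_ge. pose proof Iv_ge. rewrite <- Iut in H0.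
      destruct (Rtotal_order (RInt (fun x => f x (ut x)) a T) (RInt (fun x => f x (v x)) a T)) as [Hlt|[Heq|Hgt]]; auto.
      + exfalso. apply (mixed xi t1 ut v); auto. apply ut_ex. apply v_ex. lra.
      + exfalso. apply (mixed xi t1 v ut); auto. apply v_ex. apply ut_ex. lra. }
  rewrite HI. reflexivity.
Qed.

Lemma wder_comb (h1 h2 h3 : R -> R) t D1 D2 D3 s : wder h1 t D1 -> wder h2 t D2 -> wder h3 t D3 ->
  wder (fun x => s * (h1 x - h2 x) - h3 x) t (s * (D1 - D2) - D3).
Proof.
  intros W1 W2 W3 e He.
  set (k := 2 * Rabs s + 1). assert (Hk : 0 < k) by (unfold k; pose proof (Rabs_pos s); lra).
  destruct (W1 (e / k) ltac:(apply Rdiv_lt_0_compat; lra)) as [d1 [Hd1 Hd1']].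
  destruct (W2 (e / k) ltac:(apply Rdiv_lt_0_compat; lra)) as [d2 [Hd2 Hd2']].
  destruct (W3 (e / k) ltac:(apply Rdiv_lt_0_compat; lra)) as [d3 [Hd3 Hd3']].
  exists (Rmin d1 (Rmin d2 d3)). split. repeat apply Rmin_pos; auto.
  intros t' Ht' Htd.
  specialize (Hd1' t' Ht' ltac:(rmm)). specialize (Hd2' t' Ht' ltac:(rmm)). specialize (Hd3' t' Ht' ltac:(rmm)).
  set (A1 := h1 t' - h1 t - D1 * (t' - t)) in *. set (A2 := h2 t' - h2 t - D2 * (t' - t)) in *.
  set (A3 := h3 t' - h3 t - D3 * (t' - t)) in *.
  replace (s * (h1 t' - h2 t') - h3 t' - (s * (h1 t - h2 t) - h3 t) - (s * (D1 - D2) - D3) * (t' - t))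
    with (s * (A1 - A2) - A3) by (unfold A1, A2, A3; ring).
  set (r := Rabs (t' - t)) in *. assert (0 <= r) by apply Rabs_pos.
  assert (Rabs (s * (A1 - A2) - A3) <= Rabs s * (Rabs A1 + Rabs A2) + Rabs A3).
  { unfold Rminus at 2. eapply Rle_trans. apply Rabs_triang. rewrite Rabs_Ropp, Rabs_mult.
    apply Rplus_le_compat_r. apply Rmult_le_compat_l. apply Rabs_pos.
    unfold Rminus. eapply Rle_trans. apply Rabs_triang. rewrite Rabs_Ropp. lra. }
  assert (Rabs s * (Rabs A1 + Rabs A2) <= Rabs s * (2 * (e / k * r))) by (apply Rmult_le_compat_l; [apply Rabs_pos|lra]).
  assert (e / k * r * k = e * r) by (field; lra).
  unfold k in *. nra.
Qed.

Lemma wder_ext (h1 h2 : R -> R) t D : (forall x, a <= x <= T -> h1 x = h2 x) -> a <= t <= T ->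
  wder h1 t D -> wder h2 t D.
Proof.
  intros He Ht W e Hep. destruct (W e Hep) as [d [Hd Hd']]. exists d. split; auto.
  intros t' Ht' Htd. rewrite <- !He by auto. auto.
Qed.

Lemma wder_is_derive (h : R -> R) x D : a < x < T -> wder h x D -> is_derive h x D.
Proof.
  intros Hx W. apply is_derive_Reals. intros eps Heps.
  destruct (W (eps / 2) ltac:(lra)) as [d [Hd Hd']].
  assert (Hdp : 0 < Rmin d (Rmin (x - a) (T - x))) by (repeat apply Rmin_pos; lra).
  exists (mkposreal _ Hdp). intros h0 Hh0 Hh0d. simpl in Hh0d.
  specialize (Hd' (x + h0) ltac:(rmm; rabs) ltac:(replace (x + h0 - x) with h0 by ring; rmm)).
  replace (x + h0 - x) with h0 in Hd' by ring.
  assert (Hp : 0 < Rabs h0) by (apply Rabs_pos_lt; auto).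
  replace ((h (x + h0) - h x) / h0 - D) with ((h (x + h0) - h x - D * h0) / h0) by (field; auto).
  unfold Rdiv. rewrite Rabs_mult, Rabs_inv.
  apply (Rmult_le_compat_r (/ Rabs h0)) in Hd'; [|left; apply Rinv_0_lt_compat; auto].
  replace (eps / 2 * Rabs h0 * / Rabs h0) with (eps / 2) in Hd' by (field; lra). lra.
Qed.

Section Cmp.
Variable sg : R.
Hypothesis Hsg : sg = 1 \/ sg = -1.

Definition phi x := sg * (ub x - vh x) - Mh x.
Definition Dphi x := sg * (Gs x (ub x) c - Kf x * dv x) - Kf x * dM x.

Lemma phi_ct x : ct phi x.
Proof. unfold phi. apply ct_minus. apply ct_mult. apply ct_const. apply ct_minus. apply ub_ct. apply vh_ct. apply Mh_ct. Qed.

Lemma phi_wder t : a <= t <= T -> wder phi t (Dphi t).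
Proof.
  intros Ht. unfold phi, Dphi. apply wder_comb.
  - apply ub_wder; auto.
  - apply (wder_ext v). intros; rewrite vh_eq; auto. auto. apply conf_to_wder; auto. apply (proj1 Hv); auto.
  - apply (wder_ext M). intros; rewrite Mh_eq; auto. auto. apply conf_to_wder; auto. apply (proj1 HM); auto.
Qed.

Lemma Dphi_sign t : a <= t <= T -> phi t > 0 -> Dphi t <= 0.
Proof.
  intros Ht Hp. unfold phi, Dphi in *. rewrite Gs_th by auto.
  rewrite vh_eq, Mh_eq in Hp by auto. pose proof (HM0 t Ht) as HMt. pose proof (Kf_pos t) as HK.
  set (g := thermistor_g lambda a T f ut t).
  destruct (HMt) as [HMp|HMz].
  - assert (Hutv : ut t - v t = sg * M t).
    { unfold ut. destruct Hsg as [-> | ->].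
      + rewrite Pj_up. rewrite vh_eq, Mh_eq by auto. ring. rewrite vh_eq, Mh_eq by auto. lra.
      + rewrite Pj_lo. rewrite vh_eq, Mh_eq by auto. ring. rewrite vh_eq, Mh_eq by auto. lra. }
    assert (Habs : Rabs (ut t - v t) = M t).
    { rewrite Hutv. destruct Hsg as [-> | ->]. rewrite Rmult_1_l, Rabs_right; lra.
      rewrite Rabs_left; lra. }
    pose proof (proj1 Htube t ut Ht ut_ex Habs) as Hi. fold g in Hi. rewrite Hutv in Hi.
    assert (sg * (g - dv t) - dM t <= 0).
    { apply (Rmult_le_reg_l (M t)); auto. rewrite Rmult_0_r. nra. }
    assert (Kf t * (sg * (g - dv t) - dM t) <= 0).
    { nra. }
    nra.
  - destruct (proj1 (proj2 Htube) t Ht (eq_sym HMz)) as [_ HdM].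
    pose proof (claimZ t Ht (eq_sym HMz)) as HZ. fold g in HZ. rewrite HZ, HdM. lra.
Qed.

Lemma cmp t : a <= t <= T -> sg * (ub t - v t) <= M t.
Proof.
  intros Ht. rewrite <- vh_eq, <- Mh_eq by auto.
  assert (phi t <= 0); [|unfold phi in H; lra].
  apply NNPP. intros Hn. apply Rnot_le_lt in Hn. set (t1 := t) in *.
  assert (Hpa : phi a <= 0).
  { unfold phi. rewrite vh_eq, Mh_eq by lra. rewrite ub_a.
    pose proof (proj2 (proj2 Htube)). destruct Hsg as [-> | ->]; rabs. }
  set (E := fun s => a <= s <= t1 /\ phi s <= 0).
  assert (HB : bound E) by (exists t1; intros s [Hs _]; lra).
  destruct (completeness E HB (ex_intro _ a (conj (conj (Rle_refl a) (proj1 Ht)) Hpa))) as [t0 [Hub Hlub]].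
  assert (Ht0a : a <= t0) by (apply Hub; split; [lra|auto]).
  assert (Ht0b : t0 <= t1) by (apply Hlub; intros s [Hs _]; lra).
  assert (Hp0 : phi t0 <= 0).
  { apply NNPP. intros Hn0. apply Rnot_le_lt in Hn0.
    destruct (phi_ct t0 (phi t0) Hn0) as [d [Hd Hd']].
    assert (Hex : exists s, E s /\ t0 - d < s).
    { apply NNPP. intros Hn1. assert (t0 <= t0 - d); [|lra]. apply Hlub. intros s Es.
      destruct (Rle_dec s (t0 - d)) as [|Hcc]; auto. exfalso. apply Hn1. exists s. split; auto. lra. }
    destruct Hex as [s [[Hs1 Hs2] Hs3]]. assert (s <= t0) by (apply Hub; split; auto).
    specialize (Hd' s ltac:(rabs)). rabs. }
  assert (Ht01 : t0 < t1) by (destruct (Req_dec t0 t1) as [Heq|]; [rewrite Heq in Hp0; lra|lra]).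
  assert (Hpos : forall s, t0 < s <= t1 -> phi s > 0).
  { intros s Hs. apply Rnot_le_lt. intros Hle. assert (s <= t0) by (apply Hub; split; [lra|auto]). lra. }
  destruct (phi_ct t0 (phi t1 - phi t0) ltac:(lra)) as [d [Hd Hd']].
  set (t0' := t0 + Rmin (d / 2) ((t1 - t0) / 2)).
  assert (Hm1 : 0 < Rmin (d / 2) ((t1 - t0) / 2)) by (apply Rmin_pos; lra).
  assert (Hm2 : Rmin (d / 2) ((t1 - t0) / 2) <= d / 2) by apply Rmin_l.
  assert (Hm3 : Rmin (d / 2) ((t1 - t0) / 2) <= (t1 - t0) / 2) by apply Rmin_r.
  assert (Ht0' : phi t0' < phi t1).
  { specialize (Hd' t0' ltac:(unfold t0'; rabs)). rabs. }
  destruct (MVT_gen phi t0' t1 Dphi) as [cc' [Hcc' Hmvt]].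
  - intros x Hx. rewrite Rmin_left, Rmax_right in Hx by (unfold t0'; lra).
    apply wder_is_derive. unfold t0' in Hx; lra. apply phi_wder. unfold t0' in Hx; lra.
  - intros x _. apply ct_cpt, phi_ct.
  - rewrite Rmin_left, Rmax_right in Hcc' by (unfold t0'; lra).
    assert (Dphi cc' <= 0). { apply Dphi_sign. unfold t0' in Hcc'; lra. apply Hpos. unfold t0' in Hcc'; lra. }
    assert (Dphi cc' * (t1 - t0') <= 0). { assert (t1 - t0' >= 0) by (unfold t0'; lra). nra. }
    lra.
Qed.

End Cmp.

Lemma tube_ok t : a <= t <= T -> Rabs (ub t - v t) <= M t.
Proof.
  intros Ht. pose proof (cmp 1 (or_introl eq_refl) t Ht). pose proof (cmp (-1) (or_intror eq_refl) t Ht). rabs.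
Qed.

Lemma ut_ub t : a <= t <= T -> ut t = ub t.
Proof. intros Ht. unfold ut. apply Pj_id. rewrite vh_eq, Mh_eq by auto. apply tube_ok; auto. Qed.

Lemma th_eq t : a <= t <= T -> thermistor_g lambda a T f ut t = thermistor_g lambda a T f ub t.
Proof.
  intros Ht. unfold thermistor_g. rewrite ut_ub by auto.
  rewrite (RInt_ext (fun x => f x (ut x)) (fun x => f x (ub x))). reflexivity.
  apply ext_open. intros x Hx. rewrite ut_ub; auto.
Qed.

Lemma final_sol : exists u du : R -> R,
    C_alpha alpha a T u du /\
    (forall t, a <= t <= T -> du t = thermistor_g lambda a T f u t) /\
    u a = ua /\
    (forall t, a <= t <= T -> Rabs (u t - v t) <= M t).
Proof.
  exists ub, (thermistor_g lambda a T f ub). split; [split|split; [|split]].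
  - intros t Ht. apply wder_to_conf; auto.
    rewrite <- th_eq, <- Gs_th by auto. apply ub_wder; auto.
  - intros t Ht. apply filterlim_within_eps. intros e He.
    set (C := RInt (fun x => f x (ub x)) a T).
    assert (Hw : ctw (thermistor_g lambda a T f ub) t).
    { apply (ctw_ext _ (fun s => lambda * Hf2 s (ub s) / C ^ 2)); auto.
      - intros s Hs. unfold thermistor_g. fold C. rewrite fut_eq by auto. rewrite ut_ub; auto.
      - unfold Rdiv. apply ct_mult. apply ct_mult. apply ct_const. apply comp_ct. apply ub_ct. apply ct_const. }
    destruct (Hw e He) as [d [Hd Hd']]. exists d. split; auto.
  - intros; reflexivity.
  - apply ub_a.
  - apply tube_ok.
Qed.

End Lim.

End Main.

Theorem theorem18 (alpha a T lambda ua : R) (f : R -> R -> R)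
  (v dv M dM : R -> R) :
  0 < alpha < 1 ->
  0 < a -> a < T -> 0 < lambda ->
  continuous_on_strip a T f ->
  (forall t x, a <= t <= T -> 0 < f t x) ->
  C_alpha alpha a T v dv ->
  C_alpha alpha a T M dM ->
  (forall t, a <= t <= T -> 0 <= M t) ->
  tube_solution alpha lambda a T ua f v dv M dM ->
  exists u du : R -> R,
    C_alpha alpha a T u du /\
    (forall t, a <= t <= T -> du t = thermistor_g lambda a T f u t) /\
    u a = ua /\
    (forall t, a <= t <= T -> Rabs (u t - v t) <= M t).
Proof.
  intros Halpha Ha HaT Hlam Hf Hfpos Hv HM HM0 Htube.
  destruct UltraM.ultra_exists as [U HU].
  assert (HU' : isU U) by exact HU.
  destruct (bounds_ex alpha a T f v dv M dM Halpha Ha HaT Hf Hfpos Hv HM HM0 U HU') as [m0 [F0 [Hm0 Hbnd]]].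
  destruct (u_ex alpha a T lambda ua f v dv M dM Halpha Ha HaT Hlam Hf Hv HM HM0 U HU' m0 F0 Hm0 Hbnd) as [u Hu].
  destruct (c_ex alpha a T lambda ua f v dv M dM Halpha Ha HaT Hf Hv HM HM0 U HU' m0 F0 Hm0 Hbnd) as [c [Hc Hcv]].
  eapply final_sol; eauto.
Qed.
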